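(* Let $\mathcal J$ be a dyadic integer and let $K=\sum_{s\ge\mathcal J,\,s\text{ dyadic}}K_s$ and $L=\sum_{s\ge\mathcal J,\,s\text{ dyadic}}L_s$ be CZ kernels, where each $K_s$, $L_s$ is a CZ building block of scale $s$. Then $K*L$ is also a CZ kernel which is a dyadic sum of CZ building blocks of scales $\ge\mathcal J$, and $$\|K*L\|_{CZ}\le C\|K\|_{CZ}\|L\|_{CZ},$$ with a constant $C$ independent of $\mathcal J$.
   Context: Dyadic integers are powers of $2$. Fix a universal $\omega>0$. For dyadic $s$, a kernel $K:\mathbb Z\to\mathbb C$ is a CZ building block of scale $s$ with constant $D>0$ if (i) $\sum_xK(x)=0$; (ii) $\operatorname{supp}K\subset[-s,s]$; (iii) $\sum_x|K(x)|^2\le D^2/s$; (iv) $\sum_x|K(x+h)-K(x)|^2\le \frac{D^2}{s}(\frac{|h|}{s})^\omega$ for all $h\in\mathbb Z$. A CZ kernel is $K=\sum_{s\text{ dyadic}}K_s$ with each $K_s$ a CZ building block of scale $s$; $\|K\|_{CZ}$ is the infimum over such representations of the supremum of the constants $D$ of the blocks. Convolution is on $\mathbb Z$. *)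

(* Defs.v *)
From Stdlib Require Import Reals ZArith Lra.
From Coquelicot Require Import Coquelicot.
Open Scope R_scope.

(* finite sum over the integer range [a, b] (used with a <= b) *)
Definition zsumC (a b : Z) (f : Z -> C) : C :=
  sum_n (fun n => f (a + Z.of_nat n)%Z) (Z.to_nat (b - a)).
Definition zsumR (a b : Z) (f : Z -> R) : R :=
  sum_n (fun n => f (a + Z.of_nat n)%Z) (Z.to_nat (b - a)).

Definition dy (k : nat) : Z := (2 ^ Z.of_nat k)%Z.

(* a^w for a >= 0, w > 0, with 0^w = 0 *)
Definition rpow (a w : R) : R := if Rle_dec a 0 then 0 else Rpower a w.

(* K is a CZ building block of scale s = 2^k with constant D.
   Since supp K ⊂ [-s,s], the sums over Z in (i),(iii) are the sums over
   [-s,s], and the sum in (iv) is the sum over [-s-|h|, s+|h|]. *)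
Definition CZblock (w : R) (K : Z -> C) (k : nat) (D : R) : Prop :=
  let s := dy k in
  zsumC (- s) s K = 0%C /\
  (forall x : Z, (Z.abs x > s)%Z -> K x = 0%C) /\
  zsumR (- s) s (fun x => (Cmod (K x)) ^ 2) <= D ^ 2 / IZR s /\
  (forall h : Z,
     zsumR (- s - Z.abs h) (s + Z.abs h)
       (fun x => (Cmod (Cminus (K (x + h)%Z) (K x))) ^ 2)
     <= D ^ 2 / IZR s * rpow (IZR (Z.abs h) / IZR s) w).

(* Kb is a representation K = sum_{s dyadic, s >= 2^j} K_s, with every
   block K_s (s = 2^k) a CZ building block of constant D, and K_s = 0
   for s < 2^j; the sum converges pointwise. *)
Definition CZrep (w : R) (j : nat) (Kb : nat -> Z -> C) (D : R) (K : Z -> C) : Prop :=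
  (forall k : nat, CZblock w (Kb k) k D) /\
  (forall k : nat, (k < j)%nat -> forall x : Z, Kb k x = 0%C) /\
  (forall x : Z, is_series (fun k => Kb k x) (K x)).

Definition CZnorm (w : R) (K : Z -> C) : Rbar :=
  Glb_Rbar (fun D => 0 < D /\ exists Kb, CZrep w 0 Kb D K).

Definition is_zsum (f : Z -> C) (l : C) : Prop :=
  exists l1 l2 : C,
    is_series (fun n : nat => f (Z.of_nat n)) l1 /\
    is_series (fun n : nat => f (- (Z.of_nat n + 1))%Z) l2 /\
    l = Cplus l1 l2.

Definition is_conv (K L M : Z -> C) : Prop :=
  forall x : Z, is_zsum (fun y => Cmult (K y) (L (x - y)%Z)) (M x).

(* Main.v *)
Require Import Defs.
From Stdlib Require Import Reals ZArith.
From Coquelicot Require Import Coquelicot.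
From Stdlib Require Import Lra Lia ClassicalEpsilon Classical FunctionalExtensionality.
Open Scope R_scope.

Fixpoint SR (a : Z) (n : nat) (f : Z -> R) : R :=
  match n with O => 0 | S n' => f a + SR (a + 1)%Z n' f end.
Fixpoint SC (a : Z) (n : nat) (f : Z -> C) : C :=
  match n with O => 0%C | S n' => Cplus (f a) (SC (a + 1)%Z n' f) end.

Lemma SR_ext a n f g : (forall x, (a <= x < a + Z.of_nat n)%Z -> f x = g x) ->
  SR a n f = SR a n g.
Proof.
  revert a; induction n; intros a H; simpl; auto.
  rewrite H by lia. rewrite (IHn (a+1)%Z); auto. intros; apply H; lia.
Qed.
Lemma SC_ext a n (f g : Z -> C) : (forall x, (a <= x < a + Z.of_nat n)%Z -> f x = g x) ->
  SC a n f = SC a n g.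
Proof.
  revert a; induction n; intros a H; simpl; auto.
  rewrite H by lia. rewrite (IHn (a+1)%Z); auto. intros; apply H; lia.
Qed.

Lemma SR_split a n m f : SR a (n + m) f = SR a n f + SR (a + Z.of_nat n) m f.
Proof.
  revert a; induction n; intros a; simpl.
  - replace (a + 0)%Z with a by lia. ring.
  - rewrite IHn. replace (a + 1 + Z.of_nat n)%Z with (a + Z.pos (Pos.of_succ_nat n))%Z by lia. ring.
Qed.
Lemma SC_split a n m (f : Z -> C) : SC a (n + m) f = Cplus (SC a n f) (SC (a + Z.of_nat n) m f).
Proof.
  revert a; induction n; intros a; simpl.
  - replace (a + 0)%Z with a by lia. ring.
  - rewrite IHn. replace (a + 1 + Z.of_nat n)%Z with (a + Z.pos (Pos.of_succ_nat n))%Z by lia. ring.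
Qed.

Lemma SR_zero a n f : (forall x, (a <= x < a + Z.of_nat n)%Z -> f x = 0) -> SR a n f = 0.
Proof.
  revert a; induction n; intros a H; simpl; auto.
  rewrite H by lia. rewrite IHn; [ring|]. intros; apply H; lia.
Qed.
Lemma SC_zero a n (f : Z -> C) : (forall x, (a <= x < a + Z.of_nat n)%Z -> f x = 0%C) -> SC a n f = 0%C.
Proof.
  revert a; induction n; intros a H; simpl; auto.
  rewrite H by lia. rewrite IHn; [ring|]. intros; apply H; lia.
Qed.

Lemma SR_plus a n f g : SR a n (fun x => f x + g x) = SR a n f + SR a n g.
Proof. revert a; induction n; intros; simpl; [ring|]. rewrite IHn; ring. Qed.
Lemma SC_plus a n (f g : Z -> C) : SC a n (fun x => Cplus (f x) (g x)) = Cplus (SC a n f) (SC a n g).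
Proof. revert a; induction n; intros; simpl; [ring|]. rewrite IHn; ring. Qed.
Lemma SR_scal a n c f : SR a n (fun x => c * f x) = c * SR a n f.
Proof. revert a; induction n; intros; simpl; [ring|]. rewrite IHn; ring. Qed.
Lemma SC_scal a n (c : C) (f : Z -> C) : SC a n (fun x => Cmult c (f x)) = Cmult c (SC a n f).
Proof. revert a; induction n; intros; simpl; [ring|]. rewrite IHn; ring. Qed.
Lemma SC_scalr a n (c : C) (f : Z -> C) : SC a n (fun x => Cmult (f x) c) = Cmult (SC a n f) c.
Proof. revert a; induction n; intros; simpl; [ring|]. rewrite IHn; ring. Qed.
Lemma SC_opp a n (f : Z -> C) : SC a n (fun x => Copp (f x)) = Copp (SC a n f).
Proof. revert a; induction n; intros; simpl; [ring|]. rewrite IHn; ring. Qed.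
Lemma SC_minus a n (f g : Z -> C) : SC a n (fun x => Cminus (f x) (g x)) = Cminus (SC a n f) (SC a n g).
Proof. revert a; induction n; intros; simpl; [ring|]. rewrite IHn; ring. Qed.

Lemma SR_le a n f g : (forall x, (a <= x < a + Z.of_nat n)%Z -> f x <= g x) ->
  SR a n f <= SR a n g.
Proof.
  revert a; induction n; intros a H; simpl; [lra|].
  apply Rplus_le_compat; [apply H; lia|]. apply IHn; intros; apply H; lia.
Qed.
Lemma SR_nonneg a n f : (forall x, (a <= x < a + Z.of_nat n)%Z -> 0 <= f x) -> 0 <= SR a n f.
Proof.
  intros H. rewrite <- (SR_zero a n (fun _ => 0)) by auto. apply SR_le; auto.
Qed.
Lemma SC_Cmod a n (f : Z -> C) : Cmod (SC a n f) <= SR a n (fun x => Cmod (f x)).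
Proof.
  revert a; induction n; intros; simpl. rewrite Cmod_0; lra.
  eapply Rle_trans; [apply Cmod_triangle|]. specialize (IHn (a+1)%Z); lra.
Qed.

Lemma SR_shift a n h f : SR a n (fun x => f (x + h)%Z) = SR (a + h) n f.
Proof.
  revert a; induction n; intros; simpl; auto. rewrite IHn.
  replace (a + 1 + h)%Z with (a + h + 1)%Z by lia. auto.
Qed.
Lemma SC_shift a n h (f : Z -> C) : SC a n (fun x => f (x + h)%Z) = SC (a + h) n f.
Proof.
  revert a; induction n; intros; simpl; auto. rewrite IHn.
  replace (a + 1 + h)%Z with (a + h + 1)%Z by lia. auto.
Qed.

Lemma SR_fubini a n b m (F : Z -> Z -> R) :
  SR a n (fun x => SR b m (F x)) = SR b m (fun y => SR a n (fun x => F x y)).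
Proof.
  revert a; induction n; intros; simpl.
  - symmetry; apply SR_zero; auto.
  - rewrite IHn. rewrite <- SR_plus. auto.
Qed.
Lemma SC_fubini a n b m (F : Z -> Z -> C) :
  SC a n (fun x => SC b m (F x)) = SC b m (fun y => SC a n (fun x => F x y)).
Proof.
  revert a; induction n; intros; simpl.
  - symmetry; apply SC_zero; auto.
  - rewrite IHn. rewrite <- SC_plus. auto.
Qed.

Lemma SR_window a n a' n' f :
  (a' <= a)%Z -> (a + Z.of_nat n <= a' + Z.of_nat n')%Z ->
  (forall x, (x < a \/ a + Z.of_nat n <= x)%Z -> f x = 0) ->
  SR a' n' f = SR a n f.
Proof.
  intros H1 H2 H3.
  set (p := Z.to_nat (a - a')). set (q := (n' - p - n)%nat).
  assert (n' = p + (n + q))%nat by (unfold q, p; lia).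
  rewrite H, !SR_split.
  rewrite (SR_zero a' p), (SR_zero _ q); [ |intros; apply H3; lia|intros; apply H3; lia].
  replace (a' + Z.of_nat p)%Z with a by (unfold p; lia). ring.
Qed.
Lemma SC_window a n a' n' (f : Z -> C) :
  (a' <= a)%Z -> (a + Z.of_nat n <= a' + Z.of_nat n')%Z ->
  (forall x, (x < a \/ a + Z.of_nat n <= x)%Z -> f x = 0%C) ->
  SC a' n' f = SC a n f.
Proof.
  intros H1 H2 H3.
  set (p := Z.to_nat (a - a')). set (q := (n' - p - n)%nat).
  assert (n' = p + (n + q))%nat by (unfold q, p; lia).
  rewrite H, !SC_split.
  rewrite (SC_zero a' p), (SC_zero _ q); [ |intros; apply H3; lia|intros; apply H3; lia].
  replace (a' + Z.of_nat p)%Z with a by (unfold p; lia). ring.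
Qed.

Lemma zsumR_SR a b f : (a <= b)%Z -> zsumR a b f = SR a (S (Z.to_nat (b - a))) f.
Proof.
  intros _. unfold zsumR. generalize (Z.to_nat (b - a)) as N. intros N.
  induction N.
  - rewrite sum_O. simpl. replace (a + 0)%Z with a by lia. ring.
  - rewrite sum_Sn, IHN. replace (S (S N)) with (S N + 1)%nat by lia.
    rewrite SR_split. simpl. change plus with Rplus. ring_simplify.
    replace (a + Z.pos (Pos.of_succ_nat N))%Z with (a + Z.of_nat (S N))%Z by lia. auto.
Qed.
Lemma zsumC_SC a b (f : Z -> C) : (a <= b)%Z -> zsumC a b f = SC a (S (Z.to_nat (b - a))) f.
Proof.
  intros _. unfold zsumC. generalize (Z.to_nat (b - a)) as N. intros N.
  induction N.
  - rewrite sum_O. simpl. replace (a + 0)%Z with a by lia. ring.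
  - rewrite sum_Sn, IHN. replace (S (S N)) with (S N + 1)%nat by lia.
    rewrite SC_split. simpl. change plus with Cplus. 
    replace (a + Z.pos (Pos.of_succ_nat N))%Z with (a + Z.of_nat (S N))%Z by lia. ring.
Qed.

Definition L2 a n (f : Z -> C) := SR a n (fun x => Cmod (f x) ^ 2).

Lemma L2_nonneg a n f : 0 <= L2 a n f.
Proof. apply SR_nonneg; intros; apply pow2_ge_0. Qed.

Lemma CS_real a n (u v : Z -> R) :
  (SR a n (fun x => u x * v x))^2 <= SR a n (fun x => u x ^ 2) * SR a n (fun x => v x ^ 2).
Proof.
  set (A := SR a n (fun x => u x ^ 2)). set (B := SR a n (fun x => u x * v x)).
  set (Cc := SR a n (fun x => v x ^ 2)).
  assert (Q : forall t, 0 <= t^2 * A - 2 * t * B + Cc).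
  { intros t. 
    assert (E : SR a n (fun x => (t * u x - v x)^2) = t^2 * A - 2 * t * B + Cc).
    { rewrite (SR_ext _ _ _ (fun x => t^2 * u x ^ 2 + ((-2*t) * (u x * v x) + v x ^ 2)))
        by (intros; ring).
      rewrite !SR_plus, !SR_scal. unfold A, B, Cc; ring. }
    rewrite <- E. apply SR_nonneg; intros; apply pow2_ge_0. }
  assert (HA : 0 <= A) by (apply SR_nonneg; intros; apply pow2_ge_0).
  destruct (Req_dec A 0) as [H0|H0].
  - destruct (Req_dec B 0) as [HB|HB]. { rewrite HB, H0. lra. }
    specialize (Q ((Cc + 1) / (2 * B))). rewrite H0 in Q.
    replace (((Cc + 1) / (2 * B)) ^ 2 * 0 - 2 * ((Cc + 1) / (2 * B)) * B + Cc) with (-1) in Q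
      by (field; auto). lra.
  - specialize (Q (B / A)).
    replace ((B / A) ^ 2 * A - 2 * (B / A) * B + Cc) with (Cc - B^2 / A) in Q by (field; auto).
    assert (B^2 / A <= Cc) by lra.
    apply Rmult_le_compat_l with (r := A) in H; [|lra].
    replace (A * (B^2/A)) with (B^2) in H by (field; auto). lra.
Qed.

Lemma CS_C a n (f g : Z -> C) :
  SR a n (fun x => Cmod (f x) * Cmod (g x)) <= sqrt (L2 a n f) * sqrt (L2 a n g).
Proof.
  rewrite <- sqrt_mult by apply L2_nonneg.
  apply Rsqr_incr_0_var; [| apply sqrt_pos].
  rewrite Rsqr_sqrt by (apply Rmult_le_pos; apply L2_nonneg).
  unfold Rsqr. replace (SR a n (fun x : Z => Cmod (f x) * Cmod (g x)) *
   SR a n (fun x : Z => Cmod (f x) * Cmod (g x))) with ((SR a n (fun x : Z => Cmod (f x) * Cmod (g x)))^2) by ring.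
  apply CS_real.
Qed.

Lemma L1_L2 a n (f : Z -> C) :
  SR a n (fun x => Cmod (f x)) <= sqrt (INR n) * sqrt (L2 a n f).
Proof.
  assert (H := CS_C a n (fun _ => RtoC 1) f).
  assert (E1 : SR a n (fun x => Cmod (RtoC 1) * Cmod (f x)) = SR a n (fun x => Cmod (f x))).
  { apply SR_ext; intros. rewrite Cmod_1; ring. }
  assert (E2 : L2 a n (fun _ => RtoC 1) = INR n).
  { unfold L2. rewrite Cmod_1.
    clear. generalize a; induction n; intros; simpl; [auto|]. rewrite IHn.
    destruct n; simpl; ring. }
  cbv beta in H. rewrite E1, E2 in H. exact H.
Qed.

Lemma Minkowski a n (f g : Z -> C) :
  sqrt (L2 a n (fun x => Cplus (f x) (g x))) <= sqrt (L2 a n f) + sqrt (L2 a n g).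
Proof.
  rewrite <- (sqrt_Rsqr (sqrt (L2 a n f) + sqrt (L2 a n g)))
    by (apply Rplus_le_le_0_compat; apply sqrt_pos).
  apply sqrt_le_1_alt. unfold Rsqr.
  assert (H := CS_C a n f g).
  assert (E : (sqrt (L2 a n f) + sqrt (L2 a n g)) * (sqrt (L2 a n f) + sqrt (L2 a n g))
     = L2 a n f + 2 * (sqrt (L2 a n f) * sqrt (L2 a n g)) + L2 a n g).
  { ring_simplify. rewrite !pow2_sqrt by apply L2_nonneg. ring. }
  rewrite E. clear E.
  eapply Rle_trans with (L2 a n f + 2 * SR a n (fun x => Cmod (f x) * Cmod (g x)) + L2 a n g); [|lra].
  unfold L2. rewrite <- SR_scal, <- !SR_plus. apply SR_le; intros.
  assert (T := Cmod_triangle (f x) (g x)). assert (T1 := Cmod_ge_0 (Cplus (f x) (g x))).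
  assert (T2 := Cmod_ge_0 (f x)). assert (T3 := Cmod_ge_0 (g x)). nra.
Qed.

Lemma L2_plus2 a n (f g : Z -> C) :
  L2 a n (fun x => Cplus (f x) (g x)) <= 2 * L2 a n f + 2 * L2 a n g.
Proof.
  unfold L2. rewrite <- !SR_scal, <- SR_plus. apply SR_le; intros.
  assert (T := Cmod_triangle (f x) (g x)). assert (T1 := Cmod_ge_0 (Cplus (f x) (g x))).
  assert (T2 := Cmod_ge_0 (f x)). assert (T3 := Cmod_ge_0 (g x)).
  assert (T4 : Cmod (Cplus (f x) (g x)) ^ 2 <= (Cmod (f x) + Cmod (g x)) ^ 2)
    by (apply pow_incr; split; auto).
  assert (T5 : 0 <= (Cmod (f x) - Cmod (g x)) ^ 2) by apply pow2_ge_0.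
  simpl in *. lra.
Qed.

Lemma L2_window a n a' n' (f : Z -> C) :
  (a' <= a)%Z -> (a + Z.of_nat n <= a' + Z.of_nat n')%Z ->
  (forall x, (x < a \/ a + Z.of_nat n <= x)%Z -> f x = 0%C) ->
  L2 a' n' f = L2 a n f.
Proof.
  intros. unfold L2. apply SR_window; auto. intros. rewrite H1 by auto. rewrite Cmod_0. ring.
Qed.

Lemma L2_scal a n c f : L2 a n (fun x => Cmult c (f x)) = Cmod c ^ 2 * L2 a n f.
Proof. unfold L2. rewrite <- SR_scal. apply SR_ext; intros. rewrite Cmod_mult. ring. Qed.

Lemma L2_shift a n h f : L2 a n (fun x => f (x + h)%Z) = L2 (a + h) n f.
Proof. unfold L2. apply (SR_shift a n h (fun x => Cmod (f x) ^ 2)). Qed.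

Fixpoint PS (F : nat -> Z -> C) (m n : nat) (x : Z) : C :=
  match n with O => 0%C | S n' => Cplus (F m x) (PS F (S m) n' x) end.
Fixpoint PSR (a : nat -> R) (m n : nat) : R :=
  match n with O => 0 | S n' => a m + PSR a (S m) n' end.

Lemma Minkowski_PS a n F m k :
  sqrt (L2 a n (PS F m k)) <= PSR (fun i => sqrt (L2 a n (F i))) m k.
Proof.
  revert m; induction k; intros; simpl.
  - unfold L2. rewrite SR_zero. rewrite sqrt_0; lra. intros; rewrite Cmod_0; ring.
  - eapply Rle_trans; [apply Minkowski|]. specialize (IHk (S m)). lra.
Qed.

Definition ex (t : R) : C := (cos t, sin t).

Lemma C_eq (u v : C) : fst u = fst v -> snd u = snd v -> u = v.
Proof. destruct u, v; simpl; intros; subst; auto. Qed.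

Lemma ex_add a b : ex (a + b) = Cmult (ex a) (ex b).
Proof. unfold ex, Cmult; simpl. rewrite cos_plus, sin_plus. apply C_eq; simpl; ring. Qed.
Lemma ex_0 : ex 0 = RtoC 1.
Proof. unfold ex. rewrite cos_0, sin_0. auto. Qed.
Lemma Cmod_ex t : Cmod (ex t) = 1.
Proof.
  unfold Cmod, ex; cbn [fst snd]. rewrite <- sqrt_1. f_equal.
  assert (H := sin2_cos2 t). unfold Rsqr in H. rewrite <- H. ring.
Qed.
Lemma ex_conj t : Cconj (ex t) = ex (- t).
Proof. unfold ex, Cconj; simpl. rewrite cos_neg, sin_neg. auto. Qed.
Lemma ex_int m : ex (2 * PI * IZR m) = RtoC 1.
Proof.
  unfold ex. apply C_eq; simpl.
  - replace (2 * PI * IZR m) with (2 * (IZR m * PI)) by ring. rewrite cos_2a_sin.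
    rewrite sin_eq_0_1 by (exists m; auto). ring.
  - apply sin_eq_0_1. exists (2 * m)%Z. rewrite mult_IZR. ring.
Qed.

Lemma Rabs_sin_le_pos x : 0 <= x -> Rabs (sin x) <= x.
Proof.
  intros H. destruct (Req_dec x 0) as [->|H0]. { rewrite sin_0, Rabs_R0; lra. }
  assert (H1 := sin_lt_x x ltac:(lra)). assert (H3 := SIN_bound x).
  assert (PI > 3) by (assert (H4 := PI2_3_2); lra).
  destruct (Rle_dec x PI).
  - assert (0 <= sin x) by (apply sin_ge_0; lra). rewrite Rabs_right; lra.
  - unfold Rabs; destruct (Rcase_abs (sin x)); lra.
Qed.
Lemma Rabs_sin_le x : Rabs (sin x) <= Rabs x.
Proof.
  destruct (Rle_dec 0 x).
  - rewrite (Rabs_right x) by lra. apply Rabs_sin_le_pos; auto.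
  - replace x with (- (- x)) by ring. rewrite sin_neg, !Rabs_Ropp.
    rewrite (Rabs_left x) by lra. apply Rabs_sin_le_pos; lra.
Qed.

Lemma Cmod_ex_m1_sq t : Cmod (Cminus (ex t) (RtoC 1)) ^ 2 = 2 - 2 * cos t.
Proof.
  unfold Cmod. rewrite pow2_sqrt.
  - unfold ex, Cminus, Cplus, Copp; cbn [fst snd].
    assert (H := sin2_cos2 t). unfold Rsqr in H. unfold RtoC; cbn [fst snd]. nra.
  - apply Rplus_le_le_0_compat; apply pow2_ge_0.
Qed.
Lemma Cmod_ex_m1_sin t : Cmod (Cminus (ex t) (RtoC 1)) ^ 2 = 4 * sin (t / 2) ^ 2.
Proof.
  rewrite Cmod_ex_m1_sq. replace t with (2 * (t / 2)) at 1 by field.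
  rewrite cos_2a_sin. ring.
Qed.
Lemma Cmod_ex_m1_le t : Cmod (Cminus (ex t) (RtoC 1)) <= Rabs t.
Proof.
  assert (H := Cmod_ex_m1_sin t). assert (H1 := Rabs_sin_le (t / 2)).
  assert (H2 : sin (t/2) ^ 2 <= (t/2)^2).
  { rewrite <- (pow2_abs (sin _)), <- (pow2_abs (t/2)). apply pow_incr; split; auto. apply Rabs_pos. }
  assert (H3 := Cmod_ge_0 (Cminus (ex t) (RtoC 1))). assert (H4 := Rabs_pos t).
  assert (H5 : Cmod (Cminus (ex t) (RtoC 1)) ^ 2 <= Rabs t ^ 2) by (rewrite pow2_abs; nra).
  nra.
Qed.

Lemma geo th a n :
  Cmult (Cminus (ex th) (RtoC 1)) (SC a n (fun k => ex (IZR k * th))) =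
  Cminus (ex (IZR (a + Z.of_nat n) * th)) (ex (IZR a * th)).
Proof.
  revert a; induction n; intros; simpl.
  - replace (a + 0)%Z with a by lia. ring.
  - rewrite Cmult_plus_distr_l, IHn.
    replace (a + 1 + Z.of_nat n)%Z with (a + Z.pos (Pos.of_succ_nat n))%Z by lia.
    rewrite (plus_IZR a 1). replace ((IZR a + IZR 1) * th) with (IZR a * th + th) by (simpl; ring).
    rewrite ex_add. ring.
Qed.

Lemma orth (n : nat) (m : Z) a : (0 < Z.abs m < Z.of_nat n)%Z ->
  SC a n (fun k => ex (IZR k * (2 * PI * IZR m / INR n))) = RtoC 0.
Proof.
  intros Hm. set (th := 2 * PI * IZR m / INR n).
  assert (Hn : 0 < INR n) by (apply lt_0_INR; lia).
  assert (Hr : Cminus (ex th) (RtoC 1) <> RtoC 0).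
  { intros E. assert (E2 := Cmod_ex_m1_sin th). rewrite E, Cmod_0 in E2.
    assert (sin (th / 2) = 0) by nra.
    apply sin_eq_0_0 in H. destruct H as [k Hk]. unfold th in Hk.
    assert (Hk2 : IZR m = IZR k * INR n) by (field_simplify in Hk; [|lra]; 
       apply Rmult_eq_reg_l with PI; [|apply PI_neq0]; 
       replace (PI * IZR m) with ((PI * IZR m / INR n) * INR n) by (field; lra);
       rewrite Hk; field; lra).
    rewrite INR_IZR_INZ, <- mult_IZR in Hk2. apply eq_IZR in Hk2.
    destruct (Z.eq_dec k 0). subst; lia. nia. }
  assert (G := geo th a n).
  rewrite plus_IZR, Rmult_plus_distr_r, ex_add in G.
  replace (IZR (Z.of_nat n) * th) with (2 * PI * IZR m) in G
    by (unfold th; rewrite <- INR_IZR_INZ; field; lra).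
  rewrite ex_int in G.
  replace (Cminus (Cmult (ex (IZR a * th)) (RtoC 1)) (ex (IZR a * th))) with (RtoC 0) in G by ring.
  replace (SC a n (fun k => ex (IZR k * th))) with
    (Cmult (Cinv (Cminus (ex th) (RtoC 1))) (Cmult (Cminus (ex th) (RtoC 1)) (SC a n (fun k => ex (IZR k * th)))))
    by (field; auto).
  rewrite G. ring.
Qed.

Definition FT a n (f : Z -> C) (xi : R) : C :=
  SC a n (fun x => Cmult (f x) (ex (- (IZR x * xi)))).

Lemma SC_conj a n (f : Z -> C) : Cconj (SC a n f) = SC a n (fun x => Cconj (f x)).
Proof.
  revert a; induction n; intros; simpl.
  - apply C_eq; simpl; ring.
  - rewrite Cplus_conj, IHn. auto.
Qed.

Lemma SR_RtoC a n f : RtoC (SR a n f) = SC a n (fun x => RtoC (f x)).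
Proof.
  revert a; induction n; intros; simpl; auto. rewrite <- IHn. apply C_eq; simpl; ring.
Qed.

Definition dlt (x y : Z) (c : C) : C := if Z.eq_dec x y then c else 0%C.

Lemma SC_delta a n x (g : Z -> C) : (a <= x < a + Z.of_nat n)%Z ->
  SC a n (fun y => dlt x y (g y)) = g x.
Proof.
  revert a; induction n; intros a H; simpl. lia.
  unfold dlt at 1. destruct (Z.eq_dec x a).
  - subst. rewrite SC_zero. ring. intros y Hy. unfold dlt. destruct (Z.eq_dec a y); [lia|auto].
  - rewrite IHn by lia. ring.
Qed.

Lemma plancherel a n f : (0 < n)%nat ->
  SR a n (fun k => Cmod (FT a n f (2 * PI * IZR k / INR n)) ^ 2) = INR n * L2 a n f.
Proof.
  intros Hn. assert (HnR : 0 < INR n) by (apply lt_0_INR; lia).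
  assert (E : RtoC (SR a n (fun k => Cmod (FT a n f (2 * PI * IZR k / INR n)) ^ 2))
              = RtoC (INR n * L2 a n f)).
  { rewrite SR_RtoC. 
    rewrite (SC_ext _ _ _ (fun k => SC a n (fun x => SC a n (fun y =>
        Cmult (Cmult (f x) (Cconj (f y))) (ex (IZR k * (2 * PI * IZR (y - x) / INR n))))))).
    2:{ intros k _. rewrite Cmod2_conj. unfold FT. rewrite SC_conj.
        rewrite <- SC_scalr. apply SC_ext; intros x _. rewrite <- SC_scal.
        apply SC_ext; intros y _. rewrite Cmult_conj, ex_conj.
        replace (Cmult (Cmult (f x) (ex (- (IZR x * (2 * PI * IZR k / INR n)))))
          (Cmult (Cconj (f y)) (ex (- - (IZR y * (2 * PI * IZR k / INR n))))))
        with (Cmult (Cmult (f x) (Cconj (f y))) (Cmult (ex (- (IZR x * (2 * PI * IZR k / INR n))))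
          (ex (- - (IZR y * (2 * PI * IZR k / INR n)))))) by ring.
        rewrite <- ex_add. f_equal. f_equal. rewrite minus_IZR. field. lra. }
    rewrite SC_fubini.
    rewrite (SC_ext _ _ _ (fun x => Cmult (Cmult (f x) (Cconj (f x))) (RtoC (INR n)))).
    2:{ intros x Hx. rewrite SC_fubini.
        rewrite (SC_ext _ _ _ (fun y => dlt x y (Cmult (Cmult (f x) (Cconj (f y))) (RtoC (INR n))))).
        - rewrite SC_delta by auto. auto.
        - intros y Hy. rewrite SC_scal. unfold dlt. destruct (Z.eq_dec x y).
          + subst. f_equal. replace (y - y)%Z with 0%Z by lia.
            rewrite (SC_ext _ _ _ (fun _ => RtoC 1)).
            * clear. generalize a. induction n; intros; simpl. auto.
              rewrite IHn. apply C_eq; simpl; [|ring]. destruct n; simpl; ring.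
            * intros. replace (IZR x * (2 * PI * IZR 0 / INR n)) with 0 by (simpl; field; lra).
              apply ex_0.
          + rewrite orth. ring. lia. }
    unfold L2. rewrite RtoC_mult, SR_RtoC, <- SC_scal. apply SC_ext; intros.
    rewrite Cmod2_conj. ring. }
  apply (f_equal fst) in E. simpl in E. exact E.
Qed.

Definition supp (R0 : nat) (f : Z -> C) := forall x, (Z.of_nat R0 < Z.abs x)%Z -> f x = 0%C.
Definition cv (R0 : nat) (f g : Z -> C) (x : Z) : C :=
  SC (- Z.of_nat R0) (2 * R0 + 1) (fun y => Cmult (f y) (g (x - y)%Z)).

Lemma supp_mono R0 R1 f : (R0 <= R1)%nat -> supp R0 f -> supp R1 f.
Proof. intros H S x Hx. apply S. lia. Qed.

Lemma SC_windowR R0 R1 (f : Z -> C) : (R0 <= R1)%nat -> supp R0 f ->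
  SC (- Z.of_nat R1) (2 * R1 + 1) f = SC (- Z.of_nat R0) (2 * R0 + 1) f.
Proof. intros H S. apply SC_window; try lia. intros x Hx. apply S. lia. Qed.

Lemma L2_windowR R0 R1 (f : Z -> C) : (R0 <= R1)%nat -> supp R0 f ->
  L2 (- Z.of_nat R1) (2 * R1 + 1) f = L2 (- Z.of_nat R0) (2 * R0 + 1) f.
Proof. intros H S. apply L2_window; try lia. intros x Hx. apply S. lia. Qed.

Lemma FT_windowR R0 R1 f xi : (R0 <= R1)%nat -> supp R0 f ->
  FT (- Z.of_nat R1) (2 * R1 + 1) f xi = FT (- Z.of_nat R0) (2 * R0 + 1) f xi.
Proof.
  intros H S. unfold FT. apply SC_window; try lia. intros x Hx. rewrite S by lia. ring.
Qed.

Lemma cv_supp R0 f g : supp R0 g -> supp (2 * R0) (cv R0 f g).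
Proof.
  intros Sg x Hx. unfold cv. apply SC_zero. intros y Hy. rewrite Sg by lia. ring.
Qed.

Lemma conv_thm R0 f g xi : supp R0 f -> supp R0 g ->
  FT (- Z.of_nat (2 * R0)) (2 * (2 * R0) + 1) (cv R0 f g) xi =
  Cmult (FT (- Z.of_nat R0) (2 * R0 + 1) f xi) (FT (- Z.of_nat R0) (2 * R0 + 1) g xi).
Proof.
  intros Sf Sg. unfold FT at 1, cv.
  rewrite (SC_ext _ _ _ (fun x => SC (- Z.of_nat R0) (2 * R0 + 1) (fun y =>
      Cmult (Cmult (f y) (ex (- (IZR y * xi)))) (Cmult (g (x - y)%Z) (ex (- (IZR (x - y) * xi))))))).
  2:{ intros x _. rewrite <- SC_scalr. apply SC_ext; intros y _.
      replace (- (IZR x * xi)) with (- (IZR y * xi) + - (IZR (x - y) * xi))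
        by (rewrite minus_IZR; ring).
      rewrite ex_add. ring. }
  rewrite SC_fubini. unfold FT. rewrite <- SC_scalr. apply SC_ext. intros y Hy.
  rewrite SC_scal. f_equal.
  rewrite (SC_shift _ _ (- y) (fun z => Cmult (g z) (ex (- (IZR z * xi))))).
  apply SC_window; try lia. intros x Hx. rewrite Sg by lia. ring.
Qed.

Lemma xi_bound R0 k : (- Z.of_nat (2 * R0) <= k < - Z.of_nat (2 * R0) + Z.of_nat (2 * (2 * R0) + 1))%Z ->
  Rabs (2 * PI * IZR k / INR (2 * (2 * R0) + 1)) <= PI.
Proof.
  intros Hk. assert (HPI := PI_RGT_0).
  assert (Hn : 0 < INR (2 * (2 * R0) + 1)) by (apply lt_0_INR; lia).
  unfold Rdiv. rewrite Rabs_mult, Rabs_mult, Rabs_Rinv by lra.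
  rewrite (Rabs_right (INR _)) by lra. rewrite Rabs_right by lra.
  rewrite <- abs_IZR.
  assert (H1 : 2 * IZR (Z.abs k) <= INR (2 * (2 * R0) + 1)).
  { rewrite INR_IZR_INZ, <- mult_IZR. apply IZR_le. lia. }
  apply Rmult_le_reg_r with (INR (2 * (2 * R0) + 1)); auto.
  rewrite Rmult_assoc, Rinv_l by lra. nra.
Qed.

Lemma op_bound R0 f g B : supp R0 f -> supp R0 g ->
  (forall xi, Rabs xi <= PI -> Cmod (FT (- Z.of_nat R0) (2 * R0 + 1) f xi) <= B) ->
  L2 (- Z.of_nat (2 * R0)) (2 * (2 * R0) + 1) (cv R0 f g) <= B ^ 2 * L2 (- Z.of_nat R0) (2 * R0 + 1) g.
Proof.
  intros Sf Sg HB. set (n := (2 * (2 * R0) + 1)%nat). set (a := (- Z.of_nat (2 * R0))%Z).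
  assert (Hn : 0 < INR n) by (apply lt_0_INR; unfold n; lia).
  assert (HB0 : 0 <= B). { eapply Rle_trans; [apply Cmod_ge_0|]. apply (HB 0). rewrite Rabs_R0. 
    apply Rlt_le, PI_RGT_0. }
  apply Rmult_le_reg_l with (INR n); auto.
  unfold a, n. rewrite <- plancherel by lia.
  rewrite <- (L2_windowR R0 (2 * R0) g) by (auto; lia).
  replace (INR (2 * (2 * R0) + 1) * (B ^ 2 * L2 (- Z.of_nat (2 * R0)) (2 * (2 * R0) + 1) g))
    with (B ^ 2 * (INR (2 * (2 * R0) + 1) * L2 (- Z.of_nat (2 * R0)) (2 * (2 * R0) + 1) g)) by ring.
  rewrite <- plancherel by lia. rewrite <- SR_scal. apply SR_le. intros k Hk.
  rewrite conv_thm by auto. rewrite Cmod_mult.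
  rewrite (FT_windowR R0 (2 * R0) g) by (auto; lia).
  assert (H1 := HB _ (xi_bound R0 k Hk)).
  assert (H2 := Cmod_ge_0 (FT (- Z.of_nat R0) (2 * R0 + 1) f (2 * PI * IZR k / INR (2 * (2 * R0) + 1)))).
  assert (H3 := Cmod_ge_0 (FT (- Z.of_nat R0) (2 * R0 + 1) g (2 * PI * IZR k / INR (2 * (2 * R0) + 1)))).
  rewrite Rpow_mult_distr. apply Rmult_le_compat_r. apply pow2_ge_0. apply pow_incr; lra.
Qed.

Fixpoint sumk (T : nat -> R) (n : nat) : R :=
  match n with O => 0 | S n' => sumk T n' + T n' end.

Definition Tf (b x : R) : R := if Rle_dec x 1 then x else Rpower x (- b).

Lemma Rpower_pos x y : 0 < Rpower x y.
Proof. unfold Rpower. apply exp_pos. Qed.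

Lemma Rpower_lt1 x b : 1 < x -> 0 < b -> Rpower x (- b) < 1.
Proof.
  intros. rewrite <- (Rpower_O x) by lra. apply Rpower_lt; lra.
Qed.

Lemma scale_sum (b t : R) : 0 < b -> 0 <= t -> forall n,
  sumk (fun k => Tf b (2 ^ k * t)) n <= 2 + 1 / (1 - Rpower 2 (- b)).
Proof.
  intros Hb Ht. set (q := Rpower 2 (- b)).
  assert (Hq1 : q < 1). { unfold q. rewrite <- (Rpower_O 2) by lra. apply Rpower_lt; lra. }
  assert (Hq0 : 0 < q) by apply Rpower_pos.
  set (Sm := sumk (fun k => Tf b (2 ^ k * t))).
  assert (Inv : forall n, (2 ^ n * t <= 1 -> Sm n <= 2 ^ n * t) /\
     (1 < 2 ^ n * t -> Sm n <= 2 + (1 - Rpower (2 ^ n * t) (- b)) / (1 - q))).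
  { induction n.
    - unfold Sm; simpl. split; intros. lra. assert (0 < 1 - Rpower (1 * t) (- b)).
      { assert (Rpower (1*t) (-b) < 1) by (apply Rpower_lt1; lra). lra. }
      assert (0 <= (1 - Rpower (1 * t) (- b)) / (1 - q)) by (apply Rdiv_le_0_compat; lra). lra.
    - destruct IHn as [I1 I2]. unfold Sm; simpl sumk; fold Sm. unfold Tf.
      assert (E : 2 ^ S n * t = 2 * (2 ^ n * t)) by (simpl; ring). rewrite E.
      destruct (Rle_dec (2 ^ n * t) 1) as [H|H].
      + specialize (I1 H). split; intros H2.
        * lra.
        * assert (0 < 1 - Rpower (2 * (2 ^ n * t)) (- b)).
          { assert (Rpower (2 * (2 ^ n * t)) (-b) < 1) by (apply Rpower_lt1; lra). lra. }
          assert (0 <= (1 - Rpower (2 * (2 ^ n * t)) (- b)) / (1 - q)) by (apply Rdiv_le_0_compat; lra).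
          assert (0 <= 2 ^ n * t) by (apply Rmult_le_pos; auto; apply pow_le; lra). lra.
      + assert (H1 : 1 < 2 ^ n * t) by lra. specialize (I2 H1). split; intros H2. lra.
        rewrite <- (Rpower_mult_distr 2 (2 ^ n * t) (- b)) by lra. fold q.
        set (y := Rpower (2 ^ n * t) (- b)) in *.
        apply Rle_trans with (2 + (1 - y) / (1 - q) + y); [lra|].
        right. field. lra. }
  intros n. destruct (Inv n) as [I1 I2]. 
  assert (0 < 1 / (1 - q)) by (apply Rdiv_lt_0_compat; lra). set (z := 1 / (1 - q)) in *.
  destruct (Rle_dec (2 ^ n * t) 1) as [Hx|Hx].
  - specialize (I1 Hx). lra.
  - specialize (I2 ltac:(lra)). 
    assert (0 < Rpower (2 ^ n * t) (- b)) by apply Rpower_pos.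
    assert ((1 - Rpower (2 ^ n * t) (- b)) / (1 - q) <= z).
    { unfold z, Rdiv. apply Rmult_le_compat_r. left; apply Rinv_0_lt_compat; lra. lra. }
    lra.
Qed.

Lemma dy_nat k : dy k = Z.of_nat (2 ^ k).
Proof. unfold dy. rewrite Nat2Z.inj_pow. auto. Qed.
Lemma p2_pos k : (1 <= 2 ^ k)%nat.
Proof. induction k; simpl; lia. Qed.
Lemma IZR_dy k : IZR (dy k) = INR (2 ^ k).
Proof. rewrite dy_nat, <- INR_IZR_INZ. auto. Qed.

Definition rng_eq a b n : (a <= b)%Z -> n = S (Z.to_nat (b - a)) -> forall f, zsumR a b f = SR a n f.
Proof. intros. subst. apply zsumR_SR; auto. Qed.

Lemma block_facts w K k D : CZblock w K k D ->
  let s := (2 ^ k)%nat in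
  SC (- Z.of_nat s) (2 * s + 1) K = 0%C /\ supp s K /\
  L2 (- Z.of_nat s) (2 * s + 1) K <= D ^ 2 / INR s /\
  (forall h : Z, L2 (- Z.of_nat (s + Z.abs_nat h)) (2 * (s + Z.abs_nat h) + 1)
                   (fun x => Cminus (K (x + h)%Z) (K x))
                 <= D ^ 2 / INR s * rpow (IZR (Z.abs h) / INR s) w).
Proof.
  intros [H1 [H2 [H3 H4]]] s. unfold s. rewrite <- IZR_dy. rewrite dy_nat in *.
  assert (Hs := p2_pos k).
  repeat split.
  - rewrite zsumC_SC in H1 by lia. rewrite <- H1. f_equal. lia.
  - intros x Hx. apply H2. lia.
  - unfold L2. rewrite zsumR_SR in H3 by lia. rewrite <- INR_IZR_INZ in *.
    eapply Rle_trans; [|apply H3]. right. f_equal. lia.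
  - intros h. specialize (H4 h). rewrite zsumR_SR in H4 by lia. unfold L2.
    eapply Rle_trans; [|apply H4]. right. f_equal; lia.
Qed.

Lemma FT_meanzero R0 K xi : SC (- Z.of_nat R0) (2 * R0 + 1) K = 0%C ->
  Cmod (FT (- Z.of_nat R0) (2 * R0 + 1) K xi) <=
  INR R0 * Rabs xi * (sqrt (INR (2 * R0 + 1)) * sqrt (L2 (- Z.of_nat R0) (2 * R0 + 1) K)).
Proof.
  intros H0. unfold FT.
  assert (E : SC (- Z.of_nat R0) (2 * R0 + 1) (fun x => Cmult (K x) (ex (- (IZR x * xi)))) =
     SC (- Z.of_nat R0) (2 * R0 + 1) (fun x => Cmult (K x) (Cminus (ex (- (IZR x * xi))) (RtoC 1)))).
  { rewrite (SC_ext _ _ (fun x => Cmult (K x) (Cminus (ex (- (IZR x * xi))) (RtoC 1)))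
      (fun x => Cminus (Cmult (K x) (ex (- (IZR x * xi)))) (Cmult (K x) (RtoC 1)))) by (intros; ring).
    rewrite SC_minus, SC_scalr, H0. ring. }
  rewrite E. eapply Rle_trans; [apply SC_Cmod|].
  eapply Rle_trans with (SR (- Z.of_nat R0) (2 * R0 + 1) (fun x => INR R0 * Rabs xi * Cmod (K x))).
  - apply SR_le. intros x Hx. rewrite Cmod_mult.
    assert (H1 := Cmod_ex_m1_le (- (IZR x * xi))).
    assert (Rabs (- (IZR x * xi)) <= INR R0 * Rabs xi).
    { rewrite Rabs_Ropp, Rabs_mult. apply Rmult_le_compat_r. apply Rabs_pos.
      rewrite INR_IZR_INZ. rewrite <- abs_IZR. apply IZR_le. lia. }
    assert (H2 := Cmod_ge_0 (K x)). rewrite (Rmult_comm (INR R0 * Rabs xi)). apply Rmult_le_compat_l; lra.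
  - rewrite SR_scal. apply Rmult_le_compat_l.
    + apply Rmult_le_pos; [apply pos_INR|apply Rabs_pos].
    + apply L1_L2.
Qed.

Lemma FT_diff R0 (hn : nat) K xi : supp R0 K ->
  Cmod (FT (- Z.of_nat R0) (2 * R0 + 1) K xi) * Cmod (Cminus (ex (INR hn * xi)) (RtoC 1)) <=
  sqrt (INR (2 * (R0 + hn) + 1)) *
  sqrt (L2 (- Z.of_nat (R0 + hn)) (2 * (R0 + hn) + 1) (fun x => Cminus (K (x + Z.of_nat hn)%Z) (K x))).
Proof.
  intros S. rewrite <- Cmod_mult.
  assert (E : Cmult (FT (- Z.of_nat R0) (2 * R0 + 1) K xi) (Cminus (ex (INR hn * xi)) (RtoC 1)) =
    SC (- Z.of_nat (R0 + hn)) (2 * (R0 + hn) + 1)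
      (fun x => Cmult (Cminus (K (x + Z.of_nat hn)%Z) (K x)) (ex (- (IZR x * xi))))).
  { rewrite (SC_ext _ _ _ (fun x => Cminus
        (Cmult (ex (INR hn * xi)) ((fun z => Cmult (K z) (ex (- (IZR z * xi)))) (x + Z.of_nat hn)%Z))
        (Cmult (K x) (ex (- (IZR x * xi)))))).
    2:{ intros x _. cbv beta. replace (- (IZR x * xi)) with (INR hn * xi + - (IZR (x + Z.of_nat hn) * xi))
         by (rewrite plus_IZR, <- INR_IZR_INZ; ring). rewrite ex_add.
        replace (INR hn * xi + - (IZR (x + Z.of_nat hn) * xi)) with (- (IZR x * xi))
         by (rewrite plus_IZR, <- INR_IZR_INZ; ring). ring. }
    rewrite SC_minus, SC_scal, (SC_shift _ _ (Z.of_nat hn) (fun z => Cmult (K z) (ex (- (IZR z * xi))))). unfold FT.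
    rewrite (SC_window (- Z.of_nat R0) (2 * R0 + 1) (- Z.of_nat (R0 + hn) + Z.of_nat hn)).
    rewrite (SC_window (- Z.of_nat R0) (2 * R0 + 1) (- Z.of_nat (R0 + hn))). ring.
    all: try lia. all: intros x Hx; rewrite S by lia; ring. }
  rewrite E. eapply Rle_trans; [apply SC_Cmod|].
  eapply Rle_trans; [|apply L1_L2]. right. apply SR_ext. intros. rewrite Cmod_mult, Cmod_ex. ring.
Qed.

Lemma h_choice t : 0 < t <= PI -> exists hn : nat, (1 <= hn)%nat /\ INR hn * t <= 6 /\
  forall xi, Rabs xi = t -> 1 <= Cmod (Cminus (ex (INR hn * xi)) (RtoC 1)).
Proof.
  intros [Ht HtP]. assert (HPI4 := PI_4). assert (HPI3 : 3 < PI) by (assert (H := PI2_3_2); lra).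
  destruct (archimed (PI / (3 * t))) as [A1 A2].
  set (u := up (PI / (3 * t))) in *.
  assert (Hp : 0 < PI / (3 * t)) by (apply Rdiv_lt_0_compat; lra).
  assert (Hu : (1 <= u)%Z). { apply le_IZR. assert (0 < IZR u) by lra. 
    assert (0 < u)%Z by (apply lt_IZR; auto). apply IZR_le; lia. }
  exists (Z.to_nat u). rewrite INR_IZR_INZ, Z2Nat.id by lia.
  assert (L1 : PI / 3 < IZR u * t).
  { apply Rmult_lt_compat_r with (r := t) in A1; auto. unfold Rdiv in A1.
    replace (PI * / (3 * t) * t) with (PI / 3) in A1 by (field; lra). lra. }
  assert (L2' : IZR u * t <= PI / 3 + t).
  { assert (IZR u <= PI / (3 * t) + 1) by lra. apply Rmult_le_compat_r with (r := t) in H; [|lra].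
    replace ((PI / (3 * t) + 1) * t) with (PI / 3 + t) in H by (field; lra). lra. }
  repeat split; try lia; try lra.
  intros xi Hxi.
  assert (Hc : cos (IZR u * xi) <= 1 / 2).
  { assert (E : cos (IZR u * xi) = cos (IZR u * t)).
    { destruct (Rle_dec 0 xi).
      - rewrite Rabs_right in Hxi by lra. subst; auto.
      - rewrite Rabs_left in Hxi by lra. rewrite <- Hxi. rewrite <- cos_neg. f_equal. ring. }
    rewrite E. destruct (Rle_dec (IZR u * t) PI).
    - rewrite <- cos_PI3. apply cos_decr_1; lra.
    - assert (cos (IZR u * t) <= 0) by (apply cos_le_0; lra). lra. }
  assert (H1 := Cmod_ex_m1_sq (IZR u * xi)). assert (H2 := Cmod_ge_0 (Cminus (ex (IZR u * xi)) (RtoC 1))).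
  nra.
Qed.

Lemma sqrt_Rpower a b : 0 < a -> sqrt (Rpower a b) = Rpower a (b / 2).
Proof.
  intros. rewrite <- Rpower_sqrt by apply Rpower_pos. rewrite Rpower_mult. f_equal; field.
Qed.
Lemma Rpower_div6 x b : 0 < x -> Rpower (6 / x) b = Rpower 6 b * Rpower x (- b).
Proof.
  intros. unfold Rdiv. rewrite <- Rpower_mult_distr by (try apply Rinv_0_lt_compat; lra).
  f_equal. unfold Rpower. rewrite ln_Rinv by lra. f_equal. ring.
Qed.

Definition c0 (w : R) := sqrt 15 * Rpower 6 (w / 2).

Lemma c0_ge w : 0 < w -> sqrt 3 <= c0 w.
Proof.
  intros. unfold c0. assert (1 <= Rpower 6 (w / 2)).
  { rewrite <- (Rpower_O 6) by lra. apply Rle_Rpower; lra. }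
  assert (sqrt 3 <= sqrt 15) by (apply sqrt_le_1_alt; lra).
  assert (0 <= sqrt 3) by apply sqrt_pos. nra.
Qed.

Lemma block_FT w K k D : 0 < w -> 0 < D -> CZblock w K k D ->
  forall xi, Rabs xi <= PI ->
  Cmod (FT (- Z.of_nat (2 ^ k)) (2 * 2 ^ k + 1) K xi) <=
  c0 w * D * Tf (w / 2) (INR (2 ^ k) * Rabs xi).
Proof.
  intros Hw HD HB xi Hxi. destruct (block_facts w K k D HB) as [F1 [F2 [F3 F4]]].
  set (s := (2 ^ k)%nat) in *. assert (Hs := p2_pos k). fold s in Hs.
  assert (HsR : 1 <= INR s) by (apply (le_INR 1); lia).
  assert (Hc0 := c0_ge w Hw).
  unfold Tf. destruct (Rle_dec (INR s * Rabs xi) 1) as [Hx|Hx].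
  - eapply Rle_trans; [apply FT_meanzero; auto|].
    assert (Q : sqrt (INR (2 * s + 1)) * sqrt (L2 (- Z.of_nat s) (2 * s + 1) K) <= sqrt 3 * D).
    { rewrite <- sqrt_mult_alt by apply pos_INR.
      rewrite <- (sqrt_pow2 D) by lra. rewrite <- sqrt_mult_alt by lra. apply sqrt_le_1_alt.
      assert (E : INR (2 * s + 1) = 2 * INR s + 1) by (rewrite plus_INR, mult_INR; simpl; ring).
      rewrite E. apply Rle_trans with ((2 * INR s + 1) * (D ^ 2 / INR s)).
      - apply Rmult_le_compat_l; [lra|auto].
      - apply Rle_trans with (3 * INR s * (D ^ 2 / INR s)).
        + apply Rmult_le_compat_r; [|lra]. apply Rdiv_le_0_compat; [nra|lra].
        + right. field. lra. }
    assert (0 <= INR s * Rabs xi) by (apply Rmult_le_pos; [apply pos_INR|apply Rabs_pos]).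
    assert (0 <= sqrt (INR (2 * s + 1)) * sqrt (L2 (- Z.of_nat s) (2 * s + 1) K))
      by (apply Rmult_le_pos; apply sqrt_pos).
    apply Rle_trans with (INR s * Rabs xi * (sqrt 3 * D)). apply Rmult_le_compat_l; auto.
    replace (c0 w * D * (INR s * Rabs xi)) with (INR s * Rabs xi * (c0 w * D)) by ring. apply Rmult_le_compat_l; auto. nra.
  - assert (Ht : 0 < Rabs xi).
    { destruct (Rabs_pos xi) as [H|H]; auto. rewrite <- H in Hx. lra. }
    destruct (h_choice (Rabs xi) (conj Ht Hxi)) as [hn [Hh1 [Hh2 Hh3]]].
    assert (D1 := FT_diff s hn K xi F2). assert (D2 := Hh3 xi eq_refl).
    assert (D3 := F4 (Z.of_nat hn)). rewrite Zabs2Nat.id, Z.abs_eq, <- INR_IZR_INZ in D3 by lia.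
    assert (HhR : 1 <= INR hn) by (apply (le_INR 1); lia).
    unfold rpow in D3. destruct (Rle_dec (INR hn / INR s) 0) as [Hz|_].
    { assert (0 < INR hn / INR s) by (apply Rdiv_lt_0_compat; lra). lra. }
    set (F := Cmod (FT (- Z.of_nat s) (2 * s + 1) K xi)) in *.
    assert (HF : 0 <= F) by apply Cmod_ge_0.
    assert (G1 : F <= sqrt (INR (2 * (s + hn) + 1)) * sqrt (D ^ 2 / INR s * Rpower (INR hn / INR s) w)).
    { apply Rle_trans with (F * Cmod (Cminus (ex (INR hn * xi)) (RtoC 1))). nra.
      eapply Rle_trans; [apply D1|]. apply Rmult_le_compat_l. apply sqrt_pos. apply sqrt_le_1_alt. auto. }
    set (x := INR s * Rabs xi) in *.
    assert (Hhs : INR hn < 6 * INR s).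
    { apply Rmult_lt_reg_r with (Rabs xi); auto. unfold x in Hx. lra. }
    assert (Hr : Rpower (INR hn / INR s) w <= Rpower (6 / x) w).
    { apply Rle_Rpower_l. lra. split. apply Rdiv_lt_0_compat; lra.
      unfold x. apply Rmult_le_reg_r with (INR s * Rabs xi). nra.
      replace (6 / (INR s * Rabs xi) * (INR s * Rabs xi)) with 6 by (field; lra).
      replace (INR hn / INR s * (INR s * Rabs xi)) with (INR hn * Rabs xi) by (field; lra). lra. }
    rewrite <- sqrt_mult_alt in G1 by apply pos_INR.
    eapply Rle_trans; [apply G1|].
    assert (E : c0 w * D * Rpower x (- (w / 2)) = sqrt (15 * D ^ 2 * Rpower (6 / x) w)).
    { assert (Hx0 : 0 < x) by lra.
      assert (H6 : 0 < 6 / x) by (apply Rdiv_lt_0_compat; lra).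
      rewrite (sqrt_mult_alt (15 * D ^ 2)) by (apply Rmult_le_pos; [lra|apply pow2_ge_0]).
      rewrite (sqrt_mult_alt 15) by lra.
      rewrite sqrt_pow2 by lra. rewrite sqrt_Rpower by auto. rewrite Rpower_div6 by auto.
      unfold c0. ring. }
    rewrite E. apply sqrt_le_1_alt.
    assert (E2 : INR (2 * (s + hn) + 1) = 2 * INR s + 2 * INR hn + 1)
      by (rewrite plus_INR, mult_INR, plus_INR; simpl; ring).
    rewrite E2.
    assert (0 < Rpower (INR hn / INR s) w) by apply Rpower_pos.
    apply Rle_trans with ((2 * INR s + 2 * INR hn + 1) * (D ^ 2 / INR s * Rpower (6 / x) w)).
    + apply Rmult_le_compat_l; [lra|]. apply Rmult_le_compat_l; auto. apply Rdiv_le_0_compat; [nra|lra].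
    + assert (0 < Rpower (6 / x) w) by apply Rpower_pos.
      apply Rle_trans with (15 * INR s * (D ^ 2 / INR s * Rpower (6 / x) w)).
      * apply Rmult_le_compat_r; [|lra]. apply Rmult_le_pos; [apply Rdiv_le_0_compat; [nra|lra]|lra].
      * right. field. lra.
Qed.

Fixpoint Fsum (F : nat -> Z -> C) (n : nat) (x : Z) : C :=
  match n with O => 0%C | S n' => Cplus (Fsum F n' x) (F n' x) end.

Lemma Fsum_supp F n R : (forall i, (i < n)%nat -> supp R (F i)) -> supp R (Fsum F n).
Proof.
  induction n; intros H x Hx; simpl; auto.
  rewrite IHn, H by (auto; lia). ring.
Qed.

Lemma FT_plus a n f g xi : FT a n (fun x => Cplus (f x) (g x)) xi = Cplus (FT a n f xi) (FT a n g xi).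
Proof. unfold FT. rewrite <- SC_plus. apply SC_ext; intros; ring. Qed.

Lemma FT_zero a n xi : FT a n (fun _ => 0%C) xi = 0%C.
Proof. unfold FT. apply SC_zero. intros; ring. Qed.

Definition Cfr (w : R) := c0 w * (2 + 1 / (1 - Rpower 2 (- (w / 2)))).

Lemma sumFT_bound w F n D R : 0 < w -> 0 < D ->
  (forall i, (i < n)%nat -> CZblock w (F i) i D) ->
  (forall i, (i < n)%nat -> (2 ^ i <= R)%nat) ->
  forall xi, Rabs xi <= PI ->
  Cmod (FT (- Z.of_nat R) (2 * R + 1) (Fsum F n) xi) <= Cfr w * D.
Proof.
  intros Hw HD HB HR xi Hxi.
  assert (G : Cmod (FT (- Z.of_nat R) (2 * R + 1) (Fsum F n) xi) <=
     c0 w * D * sumk (fun k => Tf (w / 2) (2 ^ k * Rabs xi)) n).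
  { induction n; simpl.
    - rewrite (FT_zero _ _ xi), Cmod_0. lra.
    - rewrite FT_plus. eapply Rle_trans; [apply Cmod_triangle|].
      rewrite Rmult_plus_distr_l. apply Rplus_le_compat.
      + apply IHn; intros; [apply HB|apply HR]; lia.
      + destruct (block_facts w (F n) n D (HB n ltac:(lia))) as [_ [S _]].
        rewrite (FT_windowR (2 ^ n) R) by (auto; apply HR; lia).
        eapply Rle_trans; [apply (block_FT w (F n) n D Hw HD (HB n ltac:(lia)) xi Hxi)|]. rewrite pow_INR. replace (INR 2) with 2 by (simpl; ring). lra. }
  eapply Rle_trans; [apply G|]. unfold Cfr.
  assert (0 < c0 w * D). { unfold c0. apply Rmult_lt_0_compat; auto.
    apply Rmult_lt_0_compat. apply sqrt_lt_R0; lra. apply Rpower_pos. }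
  apply Rle_trans with (c0 w * D * (2 + 1 / (1 - Rpower 2 (- (w / 2))))).
  - apply Rmult_le_compat_l. lra. apply scale_sum. lra. apply Rabs_pos.
  - right; ring.
Qed.

Lemma Cfr_pos w : 0 < w -> 0 < Cfr w.
Proof.
  intros Hw. unfold Cfr, c0. assert (Rpower 2 (- (w / 2)) < 1) by (apply Rpower_lt1; lra).
  assert (0 < 1 / (1 - Rpower 2 (- (w / 2)))) by (apply Rdiv_lt_0_compat; lra).
  apply Rmult_lt_0_compat; [|lra]. apply Rmult_lt_0_compat. apply sqrt_lt_R0; lra. apply Rpower_pos.
Qed.

Lemma FT_0 a n f : FT a n f 0 = SC a n f.
Proof. unfold FT. apply SC_ext; intros. rewrite Rmult_0_r, Ropp_0, ex_0. ring. Qed.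

Lemma cv_sum R f g : supp R f -> supp R g ->
  SC (- Z.of_nat (2 * R)) (2 * (2 * R) + 1) (cv R f g) =
  Cmult (SC (- Z.of_nat R) (2 * R + 1) f) (SC (- Z.of_nat R) (2 * R + 1) g).
Proof. intros. rewrite <- !FT_0. apply conv_thm; auto. Qed.

Lemma SC_one a (f : Z -> C) : SC a 1 f = f a.
Proof. simpl. ring. Qed.

Lemma SC_refl a n F : SC a n (fun y => F (- y)%Z) = SC (- (a + Z.of_nat n - 1)) n F.
Proof.
  revert a; induction n; intros; [simpl; auto|].
  replace (S n) with (n + 1)%nat by lia. rewrite SC_split, IHn, SC_one.
  replace (n + 1)%nat with (1 + n)%nat by lia. rewrite SC_split, SC_one.
  replace (- (a + Z.of_nat (1 + n) - 1) + Z.of_nat 1)%Z with (- (a + Z.of_nat n - 1))%Z by lia.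
  replace (- (a + Z.of_nat n))%Z with (- (a + Z.of_nat (1 + n) - 1))%Z by lia. ring.
Qed.

Lemma cv_comm R f g : supp R f -> supp R g -> forall x, cv R f g x = cv R g f x.
Proof.
  intros Sf Sg x.
  destruct (Z_lt_le_dec (Z.of_nat (2 * R)) (Z.abs x)) as [Hx|Hx].
  { rewrite (cv_supp R f g Sg x), (cv_supp R g f Sf x) by lia. auto. }
  unfold cv.
  set (P := fun z => Cmult (g z) (f (x - z)%Z)).
  rewrite (SC_ext _ _ _ (fun y => (fun u => P (u + x)%Z) (- y)%Z)).
  2:{ intros y _. unfold P. replace (- y + x)%Z with (x - y)%Z by lia.
      replace (x - (x - y))%Z with y by lia. ring. }
  rewrite (SC_refl _ _ (fun u => P (u + x)%Z)). rewrite (SC_shift _ _ x P).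
  set (c := Z.max (- Z.of_nat R) (x - Z.of_nat R)).
  set (m := Z.to_nat (Z.min (Z.of_nat R) (x + Z.of_nat R) - c + 1)).
  assert (HP : forall z, (z < c \/ c + Z.of_nat m <= z)%Z -> P z = 0%C).
  { intros z Hz. unfold P. unfold m, c in Hz.
    destruct (Z_lt_le_dec (Z.of_nat R) (Z.abs z)).
    - rewrite Sg by lia. ring.
    - rewrite Sf by lia. ring. }
  rewrite (SC_window c m) by (unfold m, c; lia || auto).
  symmetry. rewrite (SC_window c m) by (unfold m, c; lia || auto). auto.
Qed.

Lemma cv_window R R' f g : (R <= R')%nat -> supp R f -> forall x, cv R' f g x = cv R f g x.
Proof. intros H Sf x. unfold cv. apply SC_window; try lia. intros y Hy. rewrite Sf by lia. ring. Qed.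

Lemma cv_diff R f g h x :
  Cminus (cv R f g (x + h)%Z) (cv R f g x) = cv R f (fun z => Cminus (g (z + h)%Z) (g z)) x.
Proof.
  unfold cv. rewrite <- SC_minus. apply SC_ext. intros y _.
  replace (x + h - y)%Z with (x - y + h)%Z by lia. ring.
Qed.

Lemma cv_plusl R f1 f2 g x : cv R (fun y => Cplus (f1 y) (f2 y)) g x = Cplus (cv R f1 g x) (cv R f2 g x).
Proof. unfold cv. rewrite <- SC_plus. apply SC_ext; intros; ring. Qed.
Lemma cv_plusr R f g1 g2 x : cv R f (fun y => Cplus (g1 y) (g2 y)) x = Cplus (cv R f g1 x) (cv R f g2 x).
Proof. unfold cv. rewrite <- SC_plus. apply SC_ext; intros; ring. Qed.

Definition Mblk (Kb Lb : nat -> Z -> C) (k : nat) (x : Z) : C :=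
  Cplus (cv (2 ^ k) (Fsum Kb (S k)) (Lb k) x) (cv (2 ^ k) (Fsum Lb k) (Kb k) x).
Definition Mb (Kb Lb : nat -> Z -> C) (m : nat) : Z -> C :=
  match m with O => fun _ => 0%C | S k => Mblk Kb Lb k end.
Definition Cstw (w : R) := 3 * Cfr w * Rpower 2 (w / 2).

Lemma Cstw_pos w : 0 < w -> 0 < Cstw w.
Proof. intros. unfold Cstw. assert (H0 := Cfr_pos w H). assert (H1 := Rpower_pos 2 (w/2)). nra. Qed.

Lemma Cstw_sq w : Cstw w ^ 2 = 9 * Cfr w ^ 2 * Rpower 2 w.
Proof.
  unfold Cstw. replace (Rpower 2 w) with (Rpower 2 (w / 2) * Rpower 2 (w / 2)).
  ring. rewrite <- Rpower_plus. f_equal. field.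
Qed.

Lemma pow2_S k : (2 ^ S k = 2 * 2 ^ k)%nat.
Proof. simpl. lia. Qed.

Lemma pow2_mono i k : (i <= k)%nat -> (2 ^ i <= 2 ^ k)%nat.
Proof. intros. apply Nat.pow_le_mono_r; lia. Qed.

Lemma supp_block w K k D : CZblock w K k D -> supp (2 ^ k) K.
Proof. intros H. apply (block_facts w K k D H). Qed.

Lemma supp_diff R (g : Z -> C) h : supp R g ->
  supp (R + Z.abs_nat h) (fun z => Cminus (g (z + h)%Z) (g z)).
Proof. intros S z Hz. rewrite !S by lia. ring. Qed.

Lemma L2_ext_fun a n (f g : Z -> C) : (forall x, f x = g x) -> L2 a n f = L2 a n g.
Proof. intros H. unfold L2. apply SR_ext. intros. rewrite H. auto. Qed.

Lemma rpow_nonneg a w : 0 <= rpow a w.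
Proof. unfold rpow. destruct (Rle_dec a 0). lra. left; apply Rpower_pos. Qed.

Lemma rpow_double a w : 0 <= a -> rpow (2 * a) w = Rpower 2 w * rpow a w.
Proof.
  intros Ha. unfold rpow. destruct (Rle_dec (2 * a) 0); destruct (Rle_dec a 0); try lra.
  rewrite Rpower_mult_distr by lra. auto.
Qed.

Lemma Mblk_block w Kb Lb DK DL k : 0 < w -> 0 < DK -> 0 < DL ->
  (forall i, CZblock w (Kb i) i DK) -> (forall i, CZblock w (Lb i) i DL) ->
  CZblock w (Mblk Kb Lb k) (S k) (Cstw w * DK * DL).
Proof.
  intros Hw HK HL BK BL.
  set (R := (2 ^ k)%nat).
  assert (HR : (1 <= R)%nat) by apply p2_pos.
  assert (HRR : 1 <= INR R) by (apply (le_INR 1); lia).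
  set (A := Fsum Kb (S k)). set (B := Fsum Lb k).
  assert (SA : forall R', (R <= R')%nat -> supp R' A).
  { intros. unfold A. apply Fsum_supp. intros i Hi. eapply supp_mono; [|apply (supp_block _ _ _ _ (BK i))].
    unfold R in H. assert (2 ^ i <= 2 ^ k)%nat by (apply pow2_mono; lia). lia. }
  assert (SB : forall R', (R <= R')%nat -> supp R' B).
  { intros. unfold B. apply Fsum_supp. intros i Hi. eapply supp_mono; [|apply (supp_block _ _ _ _ (BL i))].
    unfold R in H. assert (2 ^ i <= 2 ^ k)%nat by (apply pow2_mono; lia). lia. }
  destruct (block_facts w (Kb k) k DK (BK k)) as [K1 [K2 [K3 K4]]].
  destruct (block_facts w (Lb k) k DL (BL k)) as [L1 [L2' [L3 L4]]].
  fold R in K1, K2, K3, K4, L1, L2', L3, L4.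
  assert (FA : forall R', (R <= R')%nat -> forall xi, Rabs xi <= PI ->
     Cmod (FT (- Z.of_nat R') (2 * R' + 1) A xi) <= Cfr w * DK).
  { intros R' HR' xi Hxi. apply sumFT_bound; auto. intros i Hi.
    assert (2 ^ i <= 2 ^ k)%nat by (apply pow2_mono; lia). unfold R in HR'; lia. }
  assert (FB : forall R', (R <= R')%nat -> forall xi, Rabs xi <= PI ->
     Cmod (FT (- Z.of_nat R') (2 * R' + 1) B xi) <= Cfr w * DL).
  { intros R' HR' xi Hxi. apply sumFT_bound; auto. intros i Hi.
    assert (2 ^ i <= 2 ^ k)%nat by (apply pow2_mono; lia). unfold R in HR'; lia. }
  assert (HC1 := Cfr_pos w Hw).
  assert (Hdy : dy (S k) = Z.of_nat (2 * R)) by (rewrite dy_nat, pow2_S; auto).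
  assert (HdyR : IZR (dy (S k)) = 2 * INR R) by (rewrite Hdy, <- INR_IZR_INZ, mult_INR; auto).
  assert (SM : supp (2 * R) (Mblk Kb Lb k)).
  { intros x Hx. unfold Mblk. fold R A B. rewrite !cv_supp; auto. ring. }
  unfold CZblock. rewrite HdyR. rewrite Hdy. repeat split.
  -
    rewrite zsumC_SC by lia.
    replace (S (Z.to_nat (Z.of_nat (2 * R) - - Z.of_nat (2 * R)))) with (2 * (2 * R) + 1)%nat by lia.
    unfold Mblk. fold R A B. rewrite SC_plus, !cv_sum; auto. rewrite K1, L1. ring.
  - intros x Hx. apply SM. lia.
  -
    rewrite zsumR_SR by lia.
    replace (S (Z.to_nat (Z.of_nat (2 * R) - - Z.of_nat (2 * R)))) with (2 * (2 * R) + 1)%nat by lia.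
    fold (L2 (- Z.of_nat (2 * R)) (2 * (2 * R) + 1) (Mblk Kb Lb k)).
    unfold Mblk. fold R A B.
    eapply Rle_trans; [apply L2_plus2|].
    assert (E1 := op_bound R A (Lb k) (Cfr w * DK) (SA R (le_n R)) L2' (FA R (le_n R))).
    assert (E2 : L2 (- Z.of_nat (2 * R)) (2 * (2 * R) + 1) (cv R B (Kb k)) <= (Cfr w * DL) ^ 2 * (DK ^ 2 / INR R)).
    { eapply Rle_trans; [apply op_bound; auto; apply SB; lia|].
      apply Rmult_le_compat_l; [apply pow2_ge_0|auto]. }
    assert (E3 : (Cfr w * DK) ^ 2 * L2 (- Z.of_nat R) (2 * R + 1) (Lb k) <= (Cfr w * DK) ^ 2 * (DL ^ 2 / INR R))
      by (apply Rmult_le_compat_l; [apply pow2_ge_0|auto]).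
    rewrite Rpow_mult_distr, Rpow_mult_distr, Cstw_sq.
    assert (H2w : 1 <= Rpower 2 w) by (rewrite <- (Rpower_O 2) by lra; apply Rle_Rpower; lra).
    apply Rle_trans with (4 * Cfr w ^ 2 * DK ^ 2 * DL ^ 2 / INR R).
    + replace (4 * Cfr w ^ 2 * DK ^ 2 * DL ^ 2 / INR R) with
        (2 * ((Cfr w * DK) ^ 2 * (DL ^ 2 / INR R)) + 2 * ((Cfr w * DL) ^ 2 * (DK ^ 2 / INR R)))
        by (field; lra). lra.
    + unfold Rdiv. rewrite Rinv_mult.
      assert (0 < / INR R) by (apply Rinv_0_lt_compat; lra).
      assert (0 < Cfr w ^ 2 * DK ^ 2 * DL ^ 2) by (apply Rmult_lt_0_compat; [apply Rmult_lt_0_compat|]; apply pow_lt; lra).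
      assert (0 <= Cfr w ^ 2 * DK ^ 2 * DL ^ 2 * / INR R) by nra.
      replace (9 * Cfr w ^ 2 * Rpower 2 w * DK ^ 2 * DL ^ 2 * (/ 2 * / INR R)) with
        (9 * / 2 * Rpower 2 w * (Cfr w ^ 2 * DK ^ 2 * DL ^ 2 * / INR R)) by ring.
      replace (4 * Cfr w ^ 2 * DK ^ 2 * DL ^ 2 * / INR R) with (4 * (Cfr w ^ 2 * DK ^ 2 * DL ^ 2 * / INR R)) by ring.
      apply Rmult_le_compat_r; lra.
  -
    intros h. set (H := Z.abs_nat h). set (R' := (R + H)%nat).
    rewrite zsumR_SR by lia.
    replace (S (Z.to_nat (Z.of_nat (2 * R) + Z.abs h - (- Z.of_nat (2 * R) - Z.abs h))))
      with (2 * (2 * R + H) + 1)%nat by (unfold H; lia).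
    replace (- Z.of_nat (2 * R) - Z.abs h)%Z with (- Z.of_nat (2 * R + H))%Z by (unfold H; lia).
    fold (L2 (- Z.of_nat (2 * R + H)) (2 * (2 * R + H) + 1)
            (fun x => Cminus (Mblk Kb Lb k (x + h)%Z) (Mblk Kb Lb k x))).
    rewrite <- (L2_windowR (2 * R + H) (2 * R')) by (unfold R'; try lia; apply supp_diff; auto).
    assert (ED : forall x, Cminus (Mblk Kb Lb k (x + h)%Z) (Mblk Kb Lb k x) =
       Cplus (cv R' A (fun z => Cminus (Lb k (z + h)%Z) (Lb k z)) x)
             (cv R' B (fun z => Cminus (Kb k (z + h)%Z) (Kb k z)) x)).
    { intros x. unfold Mblk. fold R A B.
      rewrite (cv_window R R' A) by (unfold R'; try lia; apply SA; lia).
      rewrite (cv_window R R' B) by (unfold R'; try lia; apply SB; lia).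
      rewrite <- !cv_diff. ring. }
    rewrite (L2_ext_fun _ _ _ _ ED).
    eapply Rle_trans; [apply L2_plus2|].
    assert (E1 := op_bound R' A _ (Cfr w * DK) (SA R' ltac:(unfold R'; lia)) (supp_diff R (Lb k) h L2')
                  (FA R' ltac:(unfold R'; lia))).
    assert (E2 := op_bound R' B _ (Cfr w * DL) (SB R' ltac:(unfold R'; lia)) (supp_diff R (Kb k) h K2)
                  (FB R' ltac:(unfold R'; lia))).
    specialize (L4 h). specialize (K4 h). fold H R' in L4, K4.
    set (r := rpow (IZR (Z.abs h) / (2 * INR R)) w).
    assert (Hr : 0 <= r) by apply rpow_nonneg.
    assert (Er : rpow (IZR (Z.abs h) / INR R) w = Rpower 2 w * r).
    { unfold r. rewrite <- rpow_double. f_equal. field. lra.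
      apply Rdiv_le_0_compat. apply IZR_le; lia. lra. }
    rewrite Er in L4, K4.
    assert (E3 : (Cfr w * DK) ^ 2 * L2 (- Z.of_nat R') (2 * R' + 1) (fun z => Cminus (Lb k (z + h)%Z) (Lb k z))
                 <= (Cfr w * DK) ^ 2 * (DL ^ 2 / INR R * (Rpower 2 w * r)))
      by (apply Rmult_le_compat_l; [apply pow2_ge_0|auto]).
    assert (E4 : (Cfr w * DL) ^ 2 * L2 (- Z.of_nat R') (2 * R' + 1) (fun z => Cminus (Kb k (z + h)%Z) (Kb k z))
                 <= (Cfr w * DL) ^ 2 * (DK ^ 2 / INR R * (Rpower 2 w * r)))
      by (apply Rmult_le_compat_l; [apply pow2_ge_0|auto]).
    rewrite Rpow_mult_distr, Rpow_mult_distr, Cstw_sq.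
    assert (H2w : 0 < Rpower 2 w) by apply Rpower_pos.
    apply Rle_trans with (4 * (Cfr w ^ 2 * DK ^ 2 * DL ^ 2 * / INR R * Rpower 2 w * r)).
    + replace (4 * (Cfr w ^ 2 * DK ^ 2 * DL ^ 2 * / INR R * Rpower 2 w * r)) with
        (2 * ((Cfr w * DK) ^ 2 * (DL ^ 2 / INR R * (Rpower 2 w * r))) +
         2 * ((Cfr w * DL) ^ 2 * (DK ^ 2 / INR R * (Rpower 2 w * r)))) by (field; lra). lra.
    + assert (0 < / INR R) by (apply Rinv_0_lt_compat; lra).
      assert (0 < Cfr w ^ 2 * DK ^ 2 * DL ^ 2) by (apply Rmult_lt_0_compat; [apply Rmult_lt_0_compat|]; apply pow_lt; lra).
      assert (0 <= Cfr w ^ 2 * DK ^ 2 * DL ^ 2 * / INR R * Rpower 2 w * r).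
      { apply Rmult_le_pos; auto. apply Rmult_le_pos; [|lra]. apply Rmult_le_pos; lra. }
      replace (9 * Cfr w ^ 2 * Rpower 2 w * DK ^ 2 * DL ^ 2 / (2 * INR R) * r) with
        (9 * / 2 * (Cfr w ^ 2 * DK ^ 2 * DL ^ 2 * / INR R * Rpower 2 w * r)) by (field; lra).
      lra.
Qed.

Lemma L2_window_le R a m f : supp R f -> L2 a m f <= L2 (- Z.of_nat R) (2 * R + 1) f.
Proof.
  intros S.
  set (a2 := Z.min a (- Z.of_nat R)).
  set (p := Z.to_nat (a - a2)).
  set (e := Z.max (a + Z.of_nat m) (Z.of_nat R + 1)).
  set (q := Z.to_nat (e - (a + Z.of_nat m))).
  rewrite <- (L2_window (- Z.of_nat R) (2 * R + 1) a2 (p + (m + q))); try (unfold p, q, a2, e; lia).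
  2:{ intros x Hx. apply S. lia. }
  unfold L2. rewrite !SR_split.
  replace (a2 + Z.of_nat p)%Z with a by (unfold p, a2; lia).
  assert (0 <= SR a2 p (fun x => Cmod (f x) ^ 2)) by (apply SR_nonneg; intros; apply pow2_ge_0).
  assert (0 <= SR (a + Z.of_nat m) q (fun x => Cmod (f x) ^ 2)) by (apply SR_nonneg; intros; apply pow2_ge_0).
  lra.
Qed.

Lemma Minkowski_Fsum a m F n :
  sqrt (L2 a m (Fsum F n)) <= sumk (fun i => sqrt (L2 a m (F i))) n.
Proof.
  induction n; simpl.
  - unfold L2. rewrite SR_zero. rewrite sqrt_0; lra. intros; rewrite Cmod_0; ring.
  - eapply Rle_trans; [apply (Minkowski a m (Fsum F n) (F n))|]. lra.
Qed.

Definition rho := / sqrt 2.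
Lemma rho_bounds : 0 < rho < 1.
Proof.
  unfold rho. assert (1 < sqrt 2). { rewrite <- sqrt_1. apply sqrt_lt_1_alt. lra. }
  split. apply Rinv_0_lt_compat; lra. rewrite <- Rinv_1. apply Rinv_lt_contravar; lra.
Qed.
Lemma rho_sq : rho ^ 2 = / 2.
Proof. unfold rho. rewrite pow_inv. rewrite pow2_sqrt by lra. auto. Qed.

Lemma block_l2 w K i D a m : 0 < D -> CZblock w K i D -> sqrt (L2 a m K) <= D * rho ^ i.
Proof.
  intros HD HB. destruct (block_facts w K i D HB) as [_ [S [H3 _]]].
  assert (Hr := rho_bounds).
  rewrite <- (sqrt_pow2 (D * rho ^ i)) by (apply Rmult_le_pos; [lra|apply pow_le; lra]).
  apply sqrt_le_1_alt. eapply Rle_trans; [apply (L2_window_le _ _ _ _ S)|].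
  eapply Rle_trans; [apply H3|]. right.
  rewrite Rpow_mult_distr, <- pow_mult, Nat.mul_comm, pow_mult, rho_sq, pow_INR, pow_inv.
  replace (INR 2) with 2 by (simpl; ring). field. apply pow_nonzero. lra.
Qed.

Lemma geo_sum n N : sumk (fun i => rho ^ (n + i)) N <= rho ^ n / (1 - rho).
Proof.
  assert (Hr := rho_bounds).
  assert (E : forall N, sumk (fun i => rho ^ (n + i)) N = rho ^ n * (1 - rho ^ N) / (1 - rho)).
  { induction N0; simpl. field; lra. rewrite IHN0, pow_add. field. lra. }
  rewrite E. assert (0 < rho ^ n) by (apply pow_lt; lra). assert (0 < rho ^ N) by (apply pow_lt; lra).
  unfold Rdiv. apply Rmult_le_compat_r. left; apply Rinv_0_lt_compat; lra. nra.
Qed.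

Lemma Fsum_shift F n N y : Fsum F (n + N) y = Cplus (Fsum F n y) (Fsum (fun i => F (n + i)%nat) N y).
Proof.
  induction N; simpl. replace (n + 0)%nat with n by lia. ring.
  replace (n + S N)%nat with (S (n + N)) by lia. simpl. rewrite IHN. ring.
Qed.

Definition Gc := 1 / (1 - rho).

Lemma tail_bound w F D n N a m : 0 < D -> (forall i, CZblock w (F i) i D) ->
  sqrt (L2 a m (fun y => Cminus (Fsum F (n + N) y) (Fsum F n y))) <= D * rho ^ n * Gc.
Proof.
  intros HD HB. assert (Hr := rho_bounds).
  rewrite (L2_ext_fun _ _ _ (Fsum (fun i => F (n + i)%nat) N)).
  2:{ intros y. rewrite Fsum_shift. ring. }
  eapply Rle_trans; [apply Minkowski_Fsum|].
  apply Rle_trans with (sumk (fun i => D * rho ^ (n + i)) N).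
  { clear -HD HB. induction N; simpl. lra. apply Rplus_le_compat; auto. apply (block_l2 w); auto. }
  assert (E : forall N, sumk (fun i => D * rho ^ (n + i)) N = D * sumk (fun i => rho ^ (n + i)) N).
  { induction N0; simpl. ring. rewrite IHN0. ring. }
  rewrite E. unfold Gc. replace (D * rho ^ n * (1 / (1 - rho))) with (D * (rho ^ n / (1 - rho))) by (field; lra).
  apply Rmult_le_compat_l. lra. apply geo_sum.
Qed.

Lemma L2_limit a m (u : nat -> Z -> C) (v : Z -> C) B :
  (forall y, filterlim (fun N => u N y) eventually (locally (v y))) ->
  (forall N, L2 a m (u N) <= B) -> L2 a m v <= B.
Proof.
  intros Hl HB.
  assert (Lm : forall a, is_lim_seq (fun N => L2 a m (u N)) (L2 a m v)).
  { clear HB. induction m; intros a0; unfold L2; simpl.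
    - apply is_lim_seq_const.
    - apply is_lim_seq_plus'.
      + assert (H1 : is_lim_seq (fun N => Cmod (u N a0)) (Cmod (v a0))).
        { assert (H0 := filterlim_comp _ _ _ _ norm _ _ _ (Hl a0) (filterlim_norm (v a0))).
          exact H0. }
        assert (H2 := is_lim_seq_mult' _ _ _ _ H1 (is_lim_seq_mult' _ _ _ _ H1 (is_lim_seq_const 1))).
        simpl. exact H2.
      + apply IHm. }
  assert (H := is_lim_seq_le _ _ _ _ HB (Lm a) (is_lim_seq_const B)). simpl in H. exact H.
Qed.

Lemma SR_refl a n F : SR a n (fun y => F (- y)%Z) = SR (- (a + Z.of_nat n - 1)) n F.
Proof.
  revert a; induction n; intros; [simpl; auto|].
  assert (SR_one : forall b (g : Z -> R), SR b 1 g = g b) by (intros; simpl; ring).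
  replace (S n) with (n + 1)%nat by lia. rewrite SR_split, IHn, SR_one.
  replace (n + 1)%nat with (1 + n)%nat by lia. rewrite SR_split, SR_one.
  replace (- (a + Z.of_nat (1 + n) - 1) + Z.of_nat 1)%Z with (- (a + Z.of_nat n - 1))%Z by lia.
  replace (- (a + Z.of_nat n))%Z with (- (a + Z.of_nat (1 + n) - 1))%Z by lia. ring.
Qed.

Lemma L2_reflect a m f x : L2 a m (fun y => f (x - y)%Z) = L2 (- (a + Z.of_nat m - 1) + x) m f.
Proof.
  unfold L2. rewrite (SR_ext _ _ _ (fun y => (fun u => Cmod (f (u + x)%Z) ^ 2) (- y)%Z)).
  2:{ intros. replace (- x0 + x)%Z with (x - x0)%Z by lia. auto. }
  rewrite (SR_refl _ _ (fun u => Cmod (f (u + x)%Z) ^ 2)).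
  apply (SR_shift _ _ x (fun z => Cmod (f z) ^ 2)).
Qed.

Lemma CS_SC a m (F G : Z -> C) :
  Cmod (SC a m (fun y => Cmult (F y) (G y))) <= sqrt (L2 a m F) * sqrt (L2 a m G).
Proof.
  eapply Rle_trans; [apply SC_Cmod|]. eapply Rle_trans; [|apply CS_C].
  right. apply SR_ext. intros. apply Cmod_mult.
Qed.

Lemma limC_close (f : nat -> C) l : filterlim f eventually (locally l) ->
  forall eps, 0 < eps -> exists N, forall n, (N <= n)%nat -> Cmod (Cminus (f n) l) < eps.
Proof.
  intros H eps Heps.
  assert (Hnf : 0 < @norm_factor _ C_NormedModule) by apply norm_factor_gt_0.
  assert (He : 0 < eps / @norm_factor _ C_NormedModule) by (apply Rdiv_lt_0_compat; auto).
  destruct (proj1 (filterlim_locally f l) H (mkposreal _ He)) as [N HN].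
  exists N. intros n Hn. specialize (HN n Hn). apply (@norm_compat2 _ C_NormedModule) in HN. simpl in HN.
  replace (norm_factor * (eps / norm_factor)) with eps in HN by (field; lra). exact HN.
Qed.

Lemma close_limC (f : nat -> C) l :
  (forall eps, 0 < eps -> exists N, forall n, (N <= n)%nat -> Cmod (Cminus (f n) l) < eps) ->
  filterlim f eventually (locally l).
Proof.
  intros H. apply filterlim_locally. intros eps. destruct (H eps (cond_pos eps)) as [N HN].
  exists N. intros n Hn. apply (@norm_compat1 _ C_NormedModule). apply HN. auto.
Qed.

Lemma Fsum_sum_n F y N : Fsum F (S N) y = sum_n (fun k => F k y) N.
Proof.
  induction N. rewrite sum_O. simpl. ring.
  rewrite sum_Sn, <- IHN. simpl. auto.
Qed.

Lemma Fsum_lim F l y : is_series (fun k => F k y) l -> filterlim (fun N => Fsum F N y) eventually (locally l).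
Proof.
  intros H. apply close_limC. intros eps Heps. destruct (limC_close _ _ H eps Heps) as [N HN].
  exists (S N). intros n Hn. destruct n. lia. rewrite Fsum_sum_n. apply HN. lia.
Qed.

Lemma sqrt_le_sq a b : 0 <= b -> sqrt a <= b -> a <= b ^ 2.
Proof.
  intros Hb H. destruct (Rle_dec a 0). { assert (0 <= b ^ 2) by apply pow2_ge_0. lra. }
  rewrite <- (pow2_sqrt a) by lra. apply pow_incr. split; auto. apply sqrt_pos.
Qed.

Lemma rep_bounds w j Kb D K : 0 < D -> CZrep w j Kb D K -> forall a m n,
  L2 a m (fun y => Cminus (K y) (Fsum Kb n y)) <= (D * rho ^ n * Gc) ^ 2 /\
  L2 a m (Fsum Kb n) <= (D * Gc) ^ 2 /\ L2 a m K <= (D * Gc) ^ 2.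
Proof.
  intros HD [HB [_ HS]] a m.
  assert (Hr := rho_bounds). assert (HG : 0 < Gc) by (unfold Gc; apply Rdiv_lt_0_compat; lra).
  assert (T1 : forall n, L2 a m (fun y => Cminus (K y) (Fsum Kb n y)) <= (D * rho ^ n * Gc) ^ 2).
  { intros n. apply (L2_limit a m (fun N y => Cminus (Fsum Kb (n + N) y) (Fsum Kb n y))).
    - intros y. apply close_limC. intros eps Heps.
      destruct (limC_close _ _ (Fsum_lim _ _ _ (HS y)) eps Heps) as [N HN].
      exists N. intros N' HN'. 
      replace (Cminus (Cminus (Fsum Kb (n + N') y) (Fsum Kb n y)) (Cminus (K y) (Fsum Kb n y)))
        with (Cminus (Fsum Kb (n + N') y) (K y)) by ring. apply HN. lia.
    - intros N. apply sqrt_le_sq. apply Rmult_le_pos; [apply Rmult_le_pos; [lra|apply pow_le; lra]|lra].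
      apply (tail_bound w); auto. }
  intros n. repeat split; auto.
  - assert (H := tail_bound w Kb D 0 n a m HD HB). simpl in H.
    rewrite (L2_ext_fun _ _ _ (fun y => Cminus (Fsum Kb n y) 0%C)) by (intros; ring).
    apply sqrt_le_sq. nra. lra.
  - assert (H := T1 0%nat). simpl in H.
    rewrite (L2_ext_fun _ _ _ (fun y => Cminus (K y) 0%C)) by (intros; ring).
    replace (D * Gc) with (D * 1 * Gc) by ring. auto.
Qed.

Lemma sum_n_pos (f : Z -> C) N : sum_n (fun n => f (Z.of_nat n)) N = SC 0 (S N) f.
Proof.
  assert (H := zsumC_SC 0 (Z.of_nat N) f ltac:(lia)). unfold zsumC in H.
  replace (Z.to_nat (Z.of_nat N - 0)) with N in H by lia. rewrite <- H.
  apply sum_n_ext. intros. f_equal.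
Qed.
Lemma sum_n_posR (f : Z -> R) N : sum_n (fun n => f (Z.of_nat n)) N = SR 0 (S N) f.
Proof.
  assert (H := zsumR_SR 0 (Z.of_nat N) f ltac:(lia)). unfold zsumR in H.
  replace (Z.to_nat (Z.of_nat N - 0)) with N in H by lia. rewrite <- H.
  apply sum_n_ext. intros. f_equal.
Qed.
Lemma sum_n_neg (f : Z -> C) N :
  sum_n (fun n => f (- (Z.of_nat n + 1))%Z) N = SC (- Z.of_nat (S N)) (S N) f.
Proof.
  rewrite (sum_n_pos (fun y => f (- (y + 1))%Z)).
  rewrite (SC_ext _ _ _ (fun y => (fun u => f (u + -1)%Z) (- y)%Z)) by (intros; f_equal; lia).
  rewrite (SC_refl _ _ (fun u => f (u + -1)%Z)).
  rewrite (SC_shift _ _ (-1) f). f_equal. lia.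
Qed.
Lemma sum_n_negR (f : Z -> R) N :
  sum_n (fun n => f (- (Z.of_nat n + 1))%Z) N = SR (- Z.of_nat (S N)) (S N) f.
Proof.
  rewrite (sum_n_posR (fun y => f (- (y + 1))%Z)).
  rewrite (SR_ext _ _ _ (fun y => (fun u => f (u + -1)%Z) (- y)%Z)) by (intros; f_equal; lia).
  rewrite (SR_refl _ _ (fun u => f (u + -1)%Z)).
  rewrite (SR_shift _ _ (-1) f). f_equal. lia.
Qed.

Lemma exs_bounded (b : nat -> R) M : (forall n, 0 <= b n) -> (forall N, sum_n b N <= M) -> ex_series b.
Proof.
  intros H0 HM. destruct (ex_finite_lim_seq_incr (sum_n b) M) as [l Hl]; auto.
  intros n. rewrite sum_Sn. specialize (H0 (S n)). change plus with Rplus. lra.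
  exists l. exact Hl.
Qed.

Lemma Mb_partial w Kb Lb DK DL x : (forall i, CZblock w (Kb i) i DK) -> (forall i, CZblock w (Lb i) i DL) ->
  forall n, sum_n (fun m => Mb Kb Lb m x) n = cv (2 ^ n) (Fsum Kb n) (Fsum Lb n) x.
Proof.
  intros BK BL.
  assert (SF : forall F D n, (forall i, CZblock w (F i) i D) -> supp (2 ^ n) (Fsum F n)).
  { intros F D n HF. apply Fsum_supp. intros i Hi. eapply supp_mono; [|apply (supp_block _ _ _ _ (HF i))].
    apply pow2_mono. lia. }
  induction n.
  - rewrite sum_O. simpl. unfold cv. rewrite SC_zero; auto. intros; ring.
  - rewrite sum_Sn, IHn. simpl Mb. unfold Mblk. change plus with Cplus.
    set (R := (2 ^ n)%nat). set (R2 := (2 ^ S n)%nat).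
    assert (HRR : (R <= R2)%nat) by (unfold R, R2; rewrite pow2_S; lia).
    change (Fsum Kb (S n)) with (fun y => Cplus (Fsum Kb n y) (Kb n y)).
    change (Fsum Lb (S n)) with (fun y => Cplus (Fsum Lb n y) (Lb n y)).
    rewrite !cv_plusl, !cv_plusr.
    assert (SKn := supp_block _ _ _ _ (BK n)). assert (SLn := supp_block _ _ _ _ (BL n)).
    assert (SKN := SF Kb DK n BK). assert (SLN := SF Lb DL n BL). fold R in SKn, SLn, SKN, SLN.
    rewrite (cv_window R R2 (Fsum Kb n)) by auto.
    rewrite (cv_window R R2 (Fsum Kb n)) by auto.
    rewrite (cv_window R R2 (Kb n) (Lb n)) by auto.
    rewrite (cv_comm R2 (Kb n) (Fsum Lb n)) by (apply (supp_mono R); auto).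
    rewrite (cv_window R R2 (Fsum Lb n)) by auto. match goal with |- ?a = ?b => change (@eq C a b) end. ring.
Qed.

Lemma sqrt_le_of a b : 0 <= b -> a <= b ^ 2 -> sqrt a <= b.
Proof. intros. rewrite <- (sqrt_pow2 b) by auto. apply sqrt_le_1_alt. auto. Qed.

Lemma conv_limit w j Kb Lb DK DL K L : 0 < w -> 0 < DK -> 0 < DL ->
  CZrep w j Kb DK K -> CZrep w j Lb DL L -> forall x,
  exists l, is_zsum (fun y => Cmult (K y) (L (x - y)%Z)) l /\ is_series (fun m => Mb Kb Lb m x) l.
Proof.
  intros Hw HK HL RK RL x.
  assert (rK := rep_bounds w j Kb DK K HK RK). assert (rL := rep_bounds w j Lb DL L HL RL).
  destruct RK as [BK _]. destruct RL as [BL _].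
  assert (Hr := rho_bounds). assert (HG : 0 < Gc) by (unfold Gc; apply Rdiv_lt_0_compat; lra).
  set (P := fun y => Cmult (K y) (L (x - y)%Z)).
  assert (AB : forall a m, SR a m (fun y => Cmod (P y)) <= DK * Gc * (DL * Gc)).
  { intros a m. eapply Rle_trans with (sqrt (L2 a m K) * sqrt (L2 a m (fun y => L (x - y)%Z))).
    - eapply Rle_trans; [|apply CS_C]. right. apply SR_ext. intros. unfold P. apply Cmod_mult.
    - rewrite L2_reflect. destruct (rK a m 0%nat) as [_ [_ H1]]. destruct (rL (- (a + Z.of_nat m - 1) + x)%Z m 0%nat) as [_ [_ H2]].
      apply Rmult_le_compat; try apply sqrt_pos; apply sqrt_le_of; auto; nra. }
  assert (E1 : ex_series (fun n => P (Z.of_nat n))).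
  { apply (@ex_series_le C_AbsRing C_CompleteNormedModule _ (fun n => Cmod (P (Z.of_nat n)))). intros; apply Rle_refl.
    apply (exs_bounded _ (DK * Gc * (DL * Gc))). intros; apply Cmod_ge_0.
    intros N. rewrite (sum_n_posR (fun y => Cmod (P y))). apply AB. }
  assert (E2 : ex_series (fun n => P (- (Z.of_nat n + 1))%Z)).
  { apply (@ex_series_le C_AbsRing C_CompleteNormedModule _ (fun n => Cmod (P (- (Z.of_nat n + 1))%Z))). intros; apply Rle_refl.
    apply (exs_bounded _ (DK * Gc * (DL * Gc))). intros; apply Cmod_ge_0.
    intros N. rewrite (sum_n_negR (fun y => Cmod (P y))). apply AB. }
  destruct E1 as [l1 H1]. destruct E2 as [l2 H2].
  exists (Cplus l1 l2). split. { exists l1, l2. auto. }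
  set (Cd := 2 * DK * DL * Gc ^ 2).
  assert (HCd : 0 < Cd) by (unfold Cd; assert (0 < Gc ^ 2) by (apply pow_lt; lra); 
     apply Rmult_lt_0_compat; [nra|auto]).
  assert (Dn : forall n a m, Cmod (Cminus (SC a m P) (SC a m (fun y => Cmult (Fsum Kb n y) (Fsum Lb n (x - y)%Z))))
                <= Cd * rho ^ n).
  { intros n a m. rewrite <- SC_minus.
    rewrite (SC_ext _ _ _ (fun y => Cplus (Cmult (Cminus (K y) (Fsum Kb n y)) (L (x - y)%Z))
                                          (Cmult (Fsum Kb n y) (Cminus (L (x - y)%Z) (Fsum Lb n (x - y)%Z)))))
      by (intros; unfold P; ring).
    rewrite SC_plus. eapply Rle_trans; [apply Cmod_triangle|].
    eapply Rle_trans; [apply Rplus_le_compat; apply CS_SC|].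
    set (a' := (- (a + Z.of_nat m - 1) + x)%Z).
    assert (R1 : L2 a m (fun y => L (x - y)%Z) = L2 a' m L) by apply (L2_reflect a m L x).
    assert (R2 : L2 a m (fun y => Cminus (L (x - y)%Z) (Fsum Lb n (x - y)%Z)) =
                 L2 a' m (fun z => Cminus (L z) (Fsum Lb n z)))
      by apply (L2_reflect a m (fun z => Cminus (L z) (Fsum Lb n z)) x).
    rewrite R1, R2.
    destruct (rK a m n) as [K1 [K2 _]]. destruct (rL a' m n) as [L1 [_ L3]].
    assert (rL1 := rL a' m 0%nat). destruct rL1 as [_ [_ L3']].
    assert (HL1 : L2 a' m (fun y => Cminus (L y) (Fsum Lb n y)) <= (DL * rho ^ n * Gc) ^ 2) by exact L1.
    assert (0 <= rho ^ n) by (apply pow_le; lra).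
    apply Rle_trans with (DK * rho ^ n * Gc * (DL * Gc) + DK * Gc * (DL * rho ^ n * Gc)).
    - assert (0 <= DK * rho ^ n * Gc) by (apply Rmult_le_pos; [apply Rmult_le_pos|]; lra).
      assert (0 <= DL * rho ^ n * Gc) by (apply Rmult_le_pos; [apply Rmult_le_pos|]; lra).
      assert (0 <= DK * Gc) by (apply Rmult_le_pos; lra).
      assert (0 <= DL * Gc) by (apply Rmult_le_pos; lra).
      apply Rplus_le_compat; apply Rmult_le_compat; try apply sqrt_pos; apply sqrt_le_of; auto.
    - right. unfold Cd. ring. }
  unfold is_series. apply close_limC. intros eps Heps.
  destruct (limC_close _ _ H1 (eps / 4)) as [N1 HN1]; [lra|].
  destruct (limC_close _ _ H2 (eps / 4)) as [N2 HN2]; [lra|].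
  assert (Hrabs : Rabs rho < 1) by (rewrite Rabs_right; lra).
  destruct (pow_lt_1_zero rho Hrabs (eps / (2 * Cd))) as [n0 Hn0].
  { apply Rdiv_lt_0_compat; lra. }
  exists n0. intros n Hn.
  match goal with |- Cmod (Cminus ?s _) < _ => assert (EM : s = cv (2 ^ n) (Fsum Kb n) (Fsum Lb n) x) by (apply (Mb_partial w Kb Lb DK DL x BK BL n)) end. rewrite EM.
  set (N := Nat.max (Nat.max N1 N2) (2 ^ n + Z.abs_nat x)).
  assert (SKN : supp (2 ^ n) (Fsum Kb n)).
  { apply Fsum_supp. intros i Hi. eapply supp_mono; [|apply (supp_block _ _ _ _ (BK i))].
    apply pow2_mono. lia. }
  set (Pn := fun y => Cmult (Fsum Kb n y) (Fsum Lb n (x - y)%Z)).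
  assert (Ec : cv (2 ^ n) (Fsum Kb n) (Fsum Lb n) x = SC (- Z.of_nat (S N)) (S N + S N) Pn).
  { unfold cv. symmetry. apply SC_window; try (unfold N; lia).
    intros y Hy. unfold Pn. rewrite SKN by lia. ring. }
  rewrite Ec.
  assert (D1 := Dn n (- Z.of_nat (S N))%Z (S N + S N)%nat). fold Pn in D1.
  rewrite SC_split in D1. replace (- Z.of_nat (S N) + Z.of_nat (S N))%Z with 0%Z in D1 by lia.
  assert (A1 := HN1 N ltac:(unfold N; lia)). rewrite sum_n_pos in A1.
  assert (A2 := HN2 N ltac:(unfold N; lia)). rewrite (sum_n_neg P) in A2.
  assert (A3 := Hn0 n Hn). rewrite Rabs_right in A3 by (apply Rle_ge, pow_le; lra).
  assert (A4 : Cd * rho ^ n < eps / 2).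
  { apply Rmult_lt_compat_l with (r := Cd) in A3; auto.
    replace (Cd * (eps / (2 * Cd))) with (eps / 2) in A3 by (field; lra). lra. }
  set (Sn := SC (- Z.of_nat (S N)) (S N) P) in *. set (Sp := SC 0 (S N) P) in *.
  set (Tn := SC (- Z.of_nat (S N)) (S N + S N) Pn) in *.
  replace (Cminus Tn (Cplus l1 l2)) with
    (Cplus (Cminus Tn (Cplus Sn Sp)) (Cplus (Cminus Sn l2) (Cminus Sp l1))) by ring.
  eapply Rle_lt_trans; [apply Cmod_triangle|].
  assert (Cmod (Cminus Tn (Cplus Sn Sp)) <= Cd * rho ^ n).
  { rewrite <- Cmod_opp. replace (Copp (Cminus Tn (Cplus Sn Sp))) with (Cminus (Cplus Sn Sp) Tn) by ring.
    exact D1. }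
  assert (H5 := Cmod_triangle (Cminus Sn l2) (Cminus Sp l1)).
  lra.
Qed.

Lemma zero_block w k D : 0 < D -> CZblock w (fun _ => 0%C) k D.
Proof.
  intros HD. assert (Hs : 0 < IZR (dy k)) by (rewrite IZR_dy; apply lt_0_INR; assert (H := p2_pos k); lia).
  assert (Hs' : (0 < dy k)%Z) by (apply lt_IZR; auto).
  unfold CZblock. repeat split.
  - rewrite zsumC_SC by lia. apply SC_zero. auto.
  - rewrite zsumR_SR by lia. rewrite SR_zero. apply Rdiv_le_0_compat; [apply pow2_ge_0|auto].
    intros. rewrite Cmod_0. ring.
  - intros h. rewrite zsumR_SR by lia. rewrite SR_zero. apply Rmult_le_pos.
    apply Rdiv_le_0_compat; [apply pow2_ge_0|auto]. apply rpow_nonneg.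
    intros. assert (E : forall z : C, Cmod (Cminus z z) ^ 2 = 0) by (intros z; replace (Cminus z z) with (RtoC 0) by ring; rewrite Cmod_0; ring). apply E.
Qed.

Lemma cv_zero_r R (f g : Z -> C) : (forall y, g y = 0%C) -> forall x, cv R f g x = 0%C.
Proof. intros H x. unfold cv. apply SC_zero. intros. rewrite H. ring. Qed.
Lemma cv_zero_l R (f g : Z -> C) : (forall y, f y = 0%C) -> forall x, cv R f g x = 0%C.
Proof. intros H x. unfold cv. apply SC_zero. intros. rewrite H. ring. Qed.

Lemma core w (Hw : 0 < w) j K L Kb Lb DK DL : 0 < DK -> 0 < DL ->
  CZrep w j Kb DK K -> CZrep w j Lb DL L ->
  exists M, is_conv K L M /\ CZrep w j (Mb Kb Lb) (Cstw w * DK * DL) M.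
Proof.
  intros HK HL RK RL.
  assert (H := conv_limit w j Kb Lb DK DL K L Hw HK HL RK RL).
  set (M := fun x => proj1_sig (constructive_indefinite_description _ (H x))).
  assert (HM : forall x, is_zsum (fun y => Cmult (K y) (L (x - y)%Z)) (M x) /\
                         is_series (fun m => Mb Kb Lb m x) (M x)).
  { intros x. unfold M. destruct (constructive_indefinite_description _ (H x)). auto. }
  exists M. split. { intros x. apply HM. }
  destruct RK as [BK [ZK _]]. destruct RL as [BL [ZL _]].
  assert (HC := Cstw_pos w Hw).
  split; [|split].
  - intros m. destruct m.
    + apply zero_block. apply Rmult_lt_0_compat; [apply Rmult_lt_0_compat|]; auto.
    + apply Mblk_block; auto.
  - intros m Hm x. destruct m; [auto|]. simpl. unfold Mblk.
    rewrite (cv_zero_r _ _ (Lb m)) by (intros; apply ZL; lia).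
    rewrite (cv_zero_r _ _ (Kb m)) by (intros; apply ZK; lia). ring.
  - intros x. apply HM.
Qed.

Lemma zsum_unique f l l' : is_zsum f l -> is_zsum f l' -> l = l'.
Proof.
  intros [a1 [a2 [H1 [H2 E]]]] [b1 [b2 [G1 [G2 E']]]]. subst.
  f_equal; [exact (filterlim_locally_unique _ _ _ H1 G1) | exact (filterlim_locally_unique _ _ _ H2 G2)].
Qed.

Lemma conv_unique K L M M' : is_conv K L M -> is_conv K L M' -> M = M'.
Proof.
  intros H H'. apply functional_extensionality. intros x. eapply zsum_unique; eauto.
Qed.

Lemma glb_facts (E : R -> Prop) D0 : E D0 -> (forall D, E D -> 0 < D) ->
  exists a, Glb_Rbar E = Finite a /\ 0 <= a /\ a <= D0 /\
    forall eps, 0 < eps -> exists D, E D /\ D < a + eps.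
Proof.
  intros HD0 Hpos. destruct (Glb_Rbar_correct E) as [lb glb].
  assert (L1 := lb D0 HD0).
  assert (L2 : Rbar_le (Finite 0) (Glb_Rbar E)).
  { apply glb. intros x Hx. simpl. left. apply Hpos; auto. }
  destruct (Glb_Rbar E) as [a| |] eqn:Ea; simpl in L1, L2; try contradiction.
  exists a. repeat split; auto.
  intros eps Heps. apply NNPP. intros Hn.
  assert (Hlb : is_lb_Rbar E (Finite (a + eps))).
  { intros x Hx. simpl. destruct (Rle_dec (a + eps) x); auto. exfalso. apply Hn. exists x. split; auto. lra. }
  assert (H2 := glb _ Hlb). simpl in H2. lra.
Qed.

Theorem lemma2p1 (w : R) (Hw : 0 < w) :
  exists Cst : R, 0 < Cst /\
  forall (j : nat) (K L : Z -> C) (Kb Lb : nat -> Z -> C) (DK DL : R),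
    0 < DK -> 0 < DL ->
    CZrep w j Kb DK K -> CZrep w j Lb DL L ->
    exists M : Z -> C,
      is_conv K L M /\
      (exists Mb : nat -> Z -> C, CZrep w j Mb (Cst * DK * DL) M) /\
      Rbar_le (CZnorm w M)
              (Rbar_mult (Finite Cst) (Rbar_mult (CZnorm w K) (CZnorm w L))).
Proof.
  exists (Cstw w). split. apply Cstw_pos; auto.
  intros j K L Kb Lb DK DL HK HL RK RL.
  destruct (core w Hw j K L Kb Lb DK DL HK HL RK RL) as [M [HMc HMr]].
  exists M. split; auto. split. { exists (Mb Kb Lb). auto. }
  assert (rep0 : forall F D G, CZrep w j F D G -> CZrep w 0 F D G).
  { intros F D G [A [B C0]]. split; auto. split; auto. intros; lia. }
  assert (HC := Cstw_pos w Hw).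
  assert (Mem : forall DK' DL', (0 < DK' /\ exists Kb', CZrep w 0 Kb' DK' K) ->
                 (0 < DL' /\ exists Lb', CZrep w 0 Lb' DL' L) ->
                 (0 < Cstw w * DK' * DL' /\ exists Mb', CZrep w 0 Mb' (Cstw w * DK' * DL') M)).
  { intros DK' DL' [HK' [Kb' RK']] [HL' [Lb' RL']].
    destruct (core w Hw 0 K L Kb' Lb' DK' DL' HK' HL' RK' RL') as [M' [HM'c HM'r]].
    rewrite <- (conv_unique K L M M' HMc HM'c) in HM'r.
    split. apply Rmult_lt_0_compat; [apply Rmult_lt_0_compat|]; auto. exists (Mb Kb' Lb'). auto. }
  destruct (glb_facts (fun D => 0 < D /\ exists Kb, CZrep w 0 Kb D K) DK) as [a [Ea [Ha0 [HaD Happ]]]].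
  { split; auto. exists Kb. apply rep0; auto. }
  { intros D [HD _]. auto. }
  destruct (glb_facts (fun D => 0 < D /\ exists Lb, CZrep w 0 Lb D L) DL) as [b [Eb [Hb0 [HbD Hbpp]]]].
  { split; auto. exists Lb. apply rep0; auto. }
  { intros D [HD _]. auto. }
  destruct (glb_facts (fun D => 0 < D /\ exists Mb, CZrep w 0 Mb D M) (Cstw w * DK * DL)) as [c [Ec [Hc0 [HcD Hcpp]]]].
  { split. apply Rmult_lt_0_compat; [apply Rmult_lt_0_compat|]; auto. exists (Mb Kb Lb). apply rep0; auto. }
  { intros D [HD _]. auto. }
  unfold CZnorm. rewrite Ea, Eb, Ec. simpl.
  destruct (Rle_dec c (Cstw w * (a * b))) as [Hle|Hgt]; auto.
  exfalso.
  set (del := (c - Cstw w * (a * b)) / (Cstw w * (a + b + 1))).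
  assert (Hdel : 0 < del) by (unfold del; apply Rdiv_lt_0_compat; nra).
  set (eps := Rmin 1 (del / 2)).
  assert (He : 0 < eps) by (unfold eps; apply Rmin_pos; lra).
  assert (He1 : eps <= 1) by apply Rmin_l. assert (He2 : eps <= del / 2) by apply Rmin_r.
  destruct (Happ eps He) as [DK' [MK HK']]. destruct (Hbpp eps He) as [DL' [ML HL']].
  destruct (Mem DK' DL' MK ML) as [MM1 MM2].
  destruct (Glb_Rbar_correct (fun D => 0 < D /\ exists Mb, CZrep w 0 Mb D M)) as [lbM _].
  assert (H1 := lbM _ (conj MM1 MM2)). rewrite Ec in H1. simpl in H1.
  destruct MK as [HDK' _]. destruct ML as [HDL' _].
  assert (H2 : Cstw w * DK' * DL' <= Cstw w * (a + eps) * (b + eps)).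
  { rewrite !Rmult_assoc. apply Rmult_le_compat_l. lra. apply Rmult_le_compat; lra. }
  assert (H3 : Cstw w * (a + eps) * (b + eps) <= Cstw w * (a * b) + Cstw w * eps * (a + b + 1)).
  { assert (eps * eps <= eps * 1) by (apply Rmult_le_compat_l; lra).
    replace (Cstw w * (a + eps) * (b + eps)) with (Cstw w * (a * b) + Cstw w * (eps * (a + b) + eps * eps)) by ring.
    replace (Cstw w * (a * b) + Cstw w * eps * (a + b + 1)) with (Cstw w * (a * b) + Cstw w * (eps * (a + b) + eps * 1)) by ring.
    apply Rplus_le_compat_l. apply Rmult_le_compat_l. lra. lra. }
  assert (H4 : Cstw w * eps * (a + b + 1) < c - Cstw w * (a * b)).
  { assert (Cstw w * eps * (a + b + 1) <= Cstw w * (del / 2) * (a + b + 1)).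
    { apply Rmult_le_compat_r. lra. apply Rmult_le_compat_l; lra. }
    assert (E : Cstw w * del * (a + b + 1) = c - Cstw w * (a * b)) by (unfold del; field; nra).
    nra. }
  lra.
Qed.
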